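(* Let $\kappa$ be a regular cardinal, $\mathbf m=(\mathfrak B_{\mathbf m},D_{\mathbf m})\in K^{\mathrm{ba}}_\kappa$, $\kappa_1,\kappa_2$ infinite regular cardinals with $\kappa>\kappa_1+\kappa_2$, and $\bar{\mathbf a}$ a $T_{\mathrm{ord}}$-$(\kappa_1,\kappa_2)$-moral problem in $\mathbf m$. Then: (1) there is a simple $\bar{\mathbf a}$-solving extension $\mathbf n$ of $\mathbf m$, unique up to isomorphism over $\mathfrak B_{\mathbf m}$; (2) $\mathbf n\in K^{\mathrm{ba}}_\kappa$ and $\mathbf m\le^{\mathrm{ba}}_\kappa\mathbf n$; (3) if $\theta_1,\theta_2$ are infinite regular cardinals, $\bar{\mathbf a}^*$ is a $T_{\mathrm{ord}}$-$(\theta_1,\theta_2)$-moral problem in $\mathbf m$ with no solution in $\mathbf m$, and $\theta_1\notin\{\kappa_1,\kappa_2\}$ or $\theta_2\notin\{\kappa_1,\kappa_2\}$, then $\bar{\mathbf a}^*$ has no solution in $\mathbf n$.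
   Context: $K^{\mathrm{ba}}_\kappa$ is the class of pairs $(\mathfrak B,D)$ with $\mathfrak B$ a complete Boolean algebra satisfying the $\kappa$-chain condition and $D$ a filter on $\mathfrak B$; $\mathbf m\le^{\mathrm{ba}}_\kappa\mathbf n$ means both are in $K^{\mathrm{ba}}_\kappa$, $\mathfrak B_{\mathbf m}$ is a complete (regular) subalgebra of $\mathfrak B_{\mathbf n}$ and $D_{\mathbf m}=D_{\mathbf n}\cap\mathfrak B_{\mathbf m}$. For infinite regular $\kappa_1,\kappa_2$ let $I=I(\kappa_1,\kappa_2)=I_1+I_2$ with $I_1=\{1\}\times\kappa_1$ ordered as $\kappa_1$, $I_2=\{2\}\times\kappa_2$ ordered reversely, $I_1$ before $I_2$. A $T_{\mathrm{ord}}$-$(\kappa_1,\kappa_2)$-moral problem in $(\mathfrak B,D)$ is $\langle\mathbf a_{s,t}:s<_It\rangle$, $\mathbf a_{s,t}\in D$, such that for every finite $u\subseteq I$ and $\mathbf t:\{(s,t)\in u^2:s<_It\}\to\{0,1\}$ with $\bigcap\mathbf a_{s,t}^{\mathbf t(s,t)}>0$ ($\mathbf a^1=\mathbf a$, $\mathbf a^0=1-\mathbf a$) there is $f:u\to\{0,\dots,|u|-1\}$ with $\mathbf t(s,t)=1\iff f(s)\le f(t)$. A solution is $\langle\mathbf b_s:s\in I\rangle$ with $\mathbf b_s\in D$ and $\mathbf b_{s_1}\cap\mathbf b_{s_2}\le\mathbf a_{s_1,s_2}$ for $s_1\in I_1,s_2\in I_2$. A simple $\bar{\mathbf a}$-solving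 extension of $\mathbf m$ is $\mathbf n=(\mathfrak B_{\mathbf n},D_{\mathbf n})$ where $\mathfrak B_{\mathbf n}$ is the completion of the Boolean algebra $\mathfrak B^0_{\mathbf n}$ generated by $\mathfrak B_{\mathbf m}\cup\{y_s:s\in I\}$ freely except for the equations holding in $\mathfrak B_{\mathbf m}$ and the relations $y_{s_1}\cap y_{s_2}\le\mathbf a_{s_1,s_2}$ for $s_1\in I_1,s_2\in I_2$; and $D_{\mathbf n}$ is the filter on $\mathfrak B_{\mathbf n}$ generated by $D_{\mathbf m}\cup\{y_s:s\in I\}$. *)

(* Defs.v *)
(* Boolean algebras are mathcomp's ctbDistrLatticeType
   (complemented, bounded, distributive lattices).  Cardinals are represented
   by types carrying a strict well-order (von Neumann initial ordinals). *)
From mathcomp Require Import all_boot all_order.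
From Stdlib Require List.
Set Implicit Arguments. Unset Strict Implicit. Unset Printing Implicit Defensive.
Import Order.TTheory.
Local Open Scope order_scope.

Definition card_le (A B : Type) : Prop := exists f : A -> B, injective f.
Definition card_lt (A B : Type) : Prop := card_le A B /\ ~ card_le B A.
Definition equinumerous (A B : Type) : Prop := exists f : A -> B, bijective f.

Definition inf_reg_card (K : Type) (lt : rel K) : Prop :=
  (forall x, ~~ lt x x) /\
      (forall x y z, lt x y -> lt y z -> lt x z) /\
      (forall x y, x <> y -> lt x y \/ lt y x) /\
      well_founded (fun x y => lt x y) /\
      (exists f : nat -> K, injective f) /\
      (* initial ordinal: every proper initial segment is of smaller size *)
      (forall x, ~ exists f : K -> K, injective f /\ forall k, lt (f k) x) /\
      (* regular: every unbounded subset has full cardinality *)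
      (forall S : K -> Prop, (forall x, exists y, S y /\ ~~ lt y x) ->
         exists f : K -> K, injective f /\ forall k, S (f k)).

(* I(k1,k2) = I_1 + I_2 : I_1 ordered as k1, I_2 ordered reversely, I_1 first *)
Definition I_lt (K1 K2 : Type) (lt1 : rel K1) (lt2 : rel K2) : rel (K1 + K2) :=
  fun s t => match s, t with
  | inl x, inl y => lt1 x y
  | inr x, inr y => lt2 y x
  | inl _, inr _ => true
  | inr _, inl _ => false
  end.

Section BA.
Context {d : Order.disp_t} (B : ctbDistrLatticeType d).

Definition is_lub (S : B -> Prop) (x : B) : Prop :=
  (forall y, S y -> y <= x) /\ (forall z, (forall y, S y -> y <= z) -> x <= z).

Definition complete_ba : Prop := forall S : B -> Prop, exists x, is_lub S x.

Definition antichain (A : B -> Prop) : Prop :=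
  (forall x, A x -> x <> \bot) /\
  (forall x y, A x -> A y -> x <> y -> x `&` y = \bot).

Definition chain_cond (K : Type) : Prop :=
  forall A : B -> Prop, antichain A ->
    ~ exists f : K -> B, injective f /\ forall k, A (f k).

Definition is_filter (D : B -> Prop) : Prop :=
  [/\ D \top, (forall x y, D x -> x <= y -> D y) &
      (forall x y, D x -> D y -> D (x `&` y))].

Definition gen_filter (G : B -> Prop) (x : B) : Prop :=
  exists u : seq B, (forall g, List.In g u -> G g) /\ \meet_(g <- u) g <= x.

Definition generated_by (G : B -> Prop) : Prop :=
  forall S : B -> Prop, (forall x, G x -> S x) -> S \bot -> S \top ->
    (forall x y, S x -> S y -> S (x `&` y)) ->
    (forall x y, S x -> S y -> S (x `|` y)) ->
    (forall x, S x -> S (~` x)) -> forall x, S x.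

Definition in_Kba (K : Type) (D : B -> Prop) : Prop :=
  [/\ complete_ba, chain_cond K & is_filter D].
End BA.

Definition ba_hom {d1 d2 : Order.disp_t} {B1 : ctbDistrLatticeType d1}
  {B2 : ctbDistrLatticeType d2} (f : B1 -> B2) : Prop :=
  [/\ (forall x y, f (x `&` y) = f x `&` f y),
      (forall x y, f (x `|` y) = f x `|` f y),
      (forall x, f (~` x) = ~` f x), f \bot = \bot & f \top = \top].

(* m <=^ba_kappa n, via the embedding h : B_m -> B_n *)
Definition le_ba (K : Type) {d1 d2 : Order.disp_t} {B1 : ctbDistrLatticeType d1}
  {B2 : ctbDistrLatticeType d2} (D1 : B1 -> Prop) (D2 : B2 -> Prop)
  (h : B1 -> B2) : Prop :=
  in_Kba K D1 /\ in_Kba K D2 /\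
  [/\ ba_hom h, injective h,
      (* the image is a complete (regular) subalgebra *)
      (forall (S : B1 -> Prop) x, is_lub S x ->
         is_lub (fun y => exists z, S z /\ y = h z) (h x)) &
      (forall x, D1 x <-> D2 (h x))].

Definition moral_problem {d : Order.disp_t} {B : ctbDistrLatticeType d}
  (K1 K2 : Type) (lt1 : rel K1) (lt2 : rel K2) (D : B -> Prop)
  (a : K1 + K2 -> K1 + K2 -> B) : Prop :=
  (forall s t, I_lt lt1 lt2 s t -> D (a s t)) /\
  forall (u : seq (K1 + K2)) (tv : K1 + K2 -> K1 + K2 -> bool), List.NoDup u ->
    \meet_(s <- u) \meet_(t <- u | I_lt lt1 lt2 s t)
       (if tv s t then a s t else ~` a s t) <> \bot ->
    exists f : K1 + K2 -> nat,
      (forall s, List.In s u -> (f s < size u)%N) /\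
      (forall s t, List.In s u -> List.In t u -> I_lt lt1 lt2 s t ->
         (tv s t = true <-> (f s <= f t)%N)).

Definition has_solution {d : Order.disp_t} {B : ctbDistrLatticeType d}
  (K1 K2 : Type) (D : B -> Prop) (a : K1 + K2 -> K1 + K2 -> B) : Prop :=
  exists b : K1 + K2 -> B, (forall s, D (b s)) /\
    forall (x : K1) (y : K2), b (inl x) `&` b (inr y) <= a (inl x) (inr y).

Definition simple_solving_ext {dm dn : Order.disp_t}
  {Bm : ctbDistrLatticeType dm} (K1 K2 : Type) (Dm : Bm -> Prop)
  (a : K1 + K2 -> K1 + K2 -> Bm)
  (Bn : ctbDistrLatticeType dn) (Dn : Bn -> Prop) (h : Bm -> Bn) : Prop :=
  exists (d0 : Order.disp_t) (B0 : ctbDistrLatticeType d0)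
         (e : Bm -> B0) (y : K1 + K2 -> B0) (j : B0 -> Bn),
  [/\ [/\ (* B0 is generated by B_m and the y_s, freely except for the equations
         of B_m and the relations y_s1 /\ y_s2 <= a_s1s2 *)
      ba_hom e,
      (forall x1 x2, y (inl x1) `&` y (inr x2) <= e (a (inl x1) (inr x2))),
      generated_by (fun z => (exists x, z = e x) \/ (exists s, z = y s)) &
      (forall (dC : Order.disp_t) (C : ctbDistrLatticeType dC)
              (g : Bm -> C) (z : K1 + K2 -> C), ba_hom g ->
         (forall x1 x2, z (inl x1) `&` z (inr x2) <= g (a (inl x1) (inr x2))) ->
         exists k : B0 -> C, [/\ ba_hom k, (forall x, k (e x) = g x) &
                                 (forall s, k (y s) = z s)])],
      (* B_n is the completion of B0: complete, with B0 densely embedded *)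
      [/\ complete_ba Bn, ba_hom j, injective j &
          (forall x : Bn, x <> \bot -> exists z : B0, z <> \bot /\ j z <= x)],
      (forall x, h x = j (e x)) &
      (forall x, Dn x <-> gen_filter (fun w => (exists v, Dm v /\ w = h v) \/
                                              (exists s, w = j (y s))) x)].

(* Main.v *)
Require Import Defs.
From HB Require Import structures.
From mathcomp Require Import all_boot all_order.
From mathcomp Require Import boolp.
From Stdlib Require List.
From Stdlib Require Import Classical.
Set Implicit Arguments. Unset Strict Implicit. Unset Printing Implicit Defensive.
Import Order.TTheory Order.Theory.
Local Open Scope order_scope.

Section BAlemmas.
Context {d : Order.disp_t} {B : ctbDistrLatticeType d}.
Implicit Types x y z : B.

Lemma disjC x y : x `&` y = \bot <-> x <= ~` y.
Proof. by rewrite -disj_leC; split => [->|/eqP]. Qed.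

Lemma le0 x : x <= \bot -> x = \bot.
Proof. by rewrite lex0 => /eqP. Qed.

Lemma meetC_bot x y : x `&` y = \bot -> y `&` x = \bot.
Proof. by rewrite meetC. Qed.

Lemma meet_compl_le x y : (x `&` ~` y == \bot) = (x <= y).
Proof. by rewrite disj_leC complK. Qed.

Lemma bigmeet_le (T : Type) (F : T -> B) r i :
  List.In i r -> \meet_(j <- r) F j <= F i.
Proof.
elim: r => //= a r IH [->|/IH H]; rewrite big_cons; first exact: leIl.
exact: le_trans (leIr _ _) H.
Qed.

Lemma le_bigmeet (T : Type) (F : T -> B) r z :
  (forall i, List.In i r -> z <= F i) -> z <= \meet_(j <- r) F j.
Proof.
elim: r => [|a r IH] H; first by rewrite big_nil lex1.
rewrite big_cons lexI H /=; [|by left]; apply: IH => i Hi; apply: H; by right.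
Qed.

Lemma le_bigjoin (T : Type) (F : T -> B) r i :
  List.In i r -> F i <= \join_(j <- r) F j.
Proof.
elim: r => //= a r IH [->|/IH H]; rewrite big_cons; first exact: leUl.
exact: le_trans H (leUr _ _).
Qed.

Lemma bigjoin_le (T : Type) (F : T -> B) r z :
  (forall i, List.In i r -> F i <= z) -> \join_(j <- r) F j <= z.
Proof.
elim: r => [|a r IH] H; first by rewrite big_nil le0x.
rewrite big_cons leUx H /=; [|by left]; apply: IH => i Hi; apply: H; by right.
Qed.

Lemma bigjoin_meetl (T : Type) (F : T -> B) r z :
  (\join_(j <- r) F j) `&` z = \join_(j <- r) (F j `&` z).
Proof.
elim: r => [|a r IH]; first by rewrite !big_nil meet0x.
by rewrite !big_cons meetUl IH.
Qed.

Lemma bigjoin_bot (T : Type) (F : T -> B) r :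
  \join_(j <- r) F j = \bot -> forall i, List.In i r -> F i = \bot.
Proof. by move=> H i Hi; apply: le0; rewrite -H; exact: le_bigjoin. Qed.

Lemma meet_compl_r x z : z `&` ~` x = z `&` ~` (x `&` z).
Proof. by rewrite complI meetUr meetxC joinx0. Qed.

Lemma le_meet_eq x y : x <= y -> x `&` y = x.
Proof. exact: meet_l. Qed.
End BAlemmas.

Section Homs.
Context {d1 d2 : Order.disp_t} {B1 : ctbDistrLatticeType d1}
  {B2 : ctbDistrLatticeType d2} (f : B1 -> B2) (hf : ba_hom f).

Lemma hom_meet x y : f (x `&` y) = f x `&` f y. Proof. by case: hf. Qed.
Lemma hom_join x y : f (x `|` y) = f x `|` f y. Proof. by case: hf. Qed.
Lemma hom_compl x : f (~` x) = ~` f x. Proof. by case: hf. Qed.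
Lemma hom0 : f \bot = \bot. Proof. by case: hf. Qed.
Lemma hom1 : f \top = \top. Proof. by case: hf. Qed.

Lemma hom_le x y : x <= y -> f x <= f y.
Proof. by move/meet_l => H; rewrite -H hom_meet leIr. Qed.

Lemma hom_meets (T : Type) (F : T -> B1) r :
  f (\meet_(i <- r) F i) = \meet_(i <- r) f (F i).
Proof. elim: r => [|a r IH]; by rewrite ?big_nil ?hom1 // !big_cons hom_meet IH. Qed.

Lemma hom_joins (T : Type) (F : T -> B1) r :
  f (\join_(i <- r) F i) = \join_(i <- r) f (F i).
Proof. elim: r => [|a r IH]; by rewrite ?big_nil ?hom0 // !big_cons hom_join IH. Qed.

Lemma hom_refl0 (inj : forall x, f x = \bot -> x = \bot) x y :
  f x <= f y -> x <= y.
Proof.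
move=> H; rewrite -meet_compl_le; apply/eqP/inj.
by rewrite hom_meet hom_compl; apply/eqP; rewrite meet_compl_le.
Qed.

Lemma inj_hom0 : injective f -> forall x, f x = \bot -> x = \bot.
Proof. by move=> inj x; rewrite -hom0 => /inj. Qed.
End Homs.

Lemma hom_comp {d1 d2 d3 : Order.disp_t} {B1 : ctbDistrLatticeType d1}
  {B2 : ctbDistrLatticeType d2} {B3 : ctbDistrLatticeType d3}
  (f : B1 -> B2) (g : B2 -> B3) : ba_hom f -> ba_hom g -> ba_hom (g \o f).
Proof.
move=> [f1 f2 f3 f4 f5] [g1 g2 g3 g4 g5]; split=> /= *;
by rewrite ?f1 ?f2 ?f3 ?f4 ?f5 ?g1 ?g2 ?g3 ?g4 ?g5.
Qed.

Definition cdisp : Order.disp_t := Order.Disp tt tt.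

Section Completion.
Context {d : Order.disp_t} (A : ctbDistrLatticeType d).

Definition perp (X : A -> Prop) : A -> Prop :=
  fun x => forall y, X y -> x `&` y = \bot.
Definition sub (X Y : A -> Prop) := forall x, X x -> Y x.
Definition regular (X : A -> Prop) := perp (perp X) = X.

Lemma setE (X Y : A -> Prop) : sub X Y -> sub Y X -> X = Y.
Proof. by move=> H1 H2; apply: funext => x; apply: propext; split; [apply: H1|apply: H2]. Qed.

Lemma perp_anti X Y : sub X Y -> sub (perp Y) (perp X).
Proof. by move=> H x Hx y /H; apply: Hx. Qed.

Lemma perp_ext X : sub X (perp (perp X)).
Proof. by move=> x Hx y /(_ x Hx); rewrite meetC. Qed.

Lemma perp3 X : perp (perp (perp X)) = perp X.
Proof. apply: setE; [apply: perp_anti; apply: perp_ext|apply: perp_ext]. Qed.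

Lemma perp_reg X : regular (perp X).
Proof. exact: perp3. Qed.

Lemma perp_down X x y : y <= x -> perp X x -> perp X y.
Proof.
move=> le Hx z /Hx H; apply: le0; rewrite -H; exact: leI2.
Qed.

Lemma perp_bot X : perp X \bot.
Proof. by move=> y _; rewrite meet0x. Qed.

Lemma reg_down X x y : regular X -> X x -> y <= x -> X y.
Proof. by rewrite /regular => <- Hx le; apply: perp_down Hx. Qed.

Lemma reg_bot X : regular X -> X \bot.
Proof. by rewrite /regular => <-; apply: perp_bot. Qed.

Lemma reg_meet X Y : regular X -> regular Y -> regular (fun x => X x /\ Y x).
Proof.
move=> hX hY; apply: setE; last exact: perp_ext.
move=> x Hx; split; [rewrite -hX|rewrite -hY]; move: x Hx;
  apply: perp_anti; apply: perp_anti; by move=> z [].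
Qed.

Lemma reg_top : regular (fun _ => True).
Proof. by apply: setE => //; apply: perp_ext. Qed.

Lemma perp_cap_reg X Y :
  perp (perp (fun x => perp X x /\ perp Y x)) = (fun x => perp X x /\ perp Y x).
Proof. exact: reg_meet (perp_reg X) (perp_reg Y). Qed.

Definition Comp := {X : A -> Prop | `[< regular X >]}.

Definition cval (X : Comp) : A -> Prop := sval X.
Lemma cvalP (X : Comp) : regular (cval X).
Proof. by case: X => X /= /asboolP. Qed.

Lemma compE (X Y : Comp) : (forall x, cval X x <-> cval Y x) -> X = Y.
Proof.
case: X => X hX; case: Y => Y hY /= H.
have E : X = Y by apply: funext => x; apply: propext.
by subst; congr exist; apply: Prop_irrelevance.
Qed.

Definition mkC (X : A -> Prop) (h : regular X) : Comp := exist _ X (introT (asboolP _) h).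

Definition cmeet (X Y : Comp) : Comp :=
  mkC (reg_meet (cvalP X) (cvalP Y)).
Definition cjoin (X Y : Comp) : Comp :=
  mkC (perp_reg (fun x => perp (cval X) x /\ perp (cval Y) x)).
Definition ccompl (X : Comp) : Comp := mkC (perp_reg (cval X)).
Definition cbot : Comp := mkC (perp_reg (fun _ => True)).
Definition ctop : Comp := mkC reg_top.

HB.instance Definition _ := gen_eqMixin Comp.
HB.instance Definition _ := gen_choiceMixin Comp.

Definition cle (X Y : Comp) := cmeet X Y == X.
Definition clt (X Y : Comp) := (Y != X) && cle X Y.

Fact cle_def X Y : cle X Y = (cmeet X Y == X). Proof. by []. Qed.
Fact clt_def X Y : clt X Y = (Y != X) && cle X Y. Proof. by []. Qed.
Fact cmeetC : commutative cmeet.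
Proof. by move=> X Y; apply: compE => x /=; tauto. Qed.
Fact cjoinC : commutative cjoin.
Proof.
move=> X Y; apply: compE => x /=; split => H y [] *; apply: H; tauto.
Qed.
Fact cmeetA : associative cmeet.
Proof. by move=> X Y Z; apply: compE => x /=; tauto. Qed.
Fact cjoinA : associative cjoin.
Proof.
move=> X Y Z; apply: compE => x /=.
rewrite /cval /= !perp_cap_reg.
split => H y Hy; apply: H; tauto.
Qed.
Fact cjoinKI : forall Y X, cmeet X (cjoin X Y) = X.
Proof.
move=> Y X; apply: compE => x /=; split; first by case.
move=> Hx; split => // y [Hy _]; rewrite meetC; exact: Hy.
Qed.
Fact cmeetKU : forall Y X, cjoin X (cmeet X Y) = X.
Proof.
move=> Y X; apply: compE => x /=.
have -> : (fun z => perp (cval X) z /\ perp (fun w => cval X w /\ cval Y w) z)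
   = perp (cval X).
  apply: setE => z; first by case.
  move=> Hz; split => //; move: z Hz; apply: perp_anti; by move=> w [].
by rewrite (cvalP X).
Qed.
Fact cmeetUl : left_distributive cmeet cjoin.
Proof.
move=> X Y Z; apply: compE => x /=.
have dX := reg_down (cvalP X); have dY := reg_down (cvalP Y);
have dZ := reg_down (cvalP Z).
split.
- move=> [Hx HZ] w [Hw1 Hw2].
  have Hv : perp (cval X) (x `&` w) /\ perp (cval Y) (x `&` w).
    split=> j Hj.
    + rewrite -meetA meetCA; apply: Hw1.
      by split; [apply: dX Hj _; apply: leIr|apply: dZ HZ _; apply: leIl].
    + rewrite -meetA meetCA; apply: Hw2.
      by split; [apply: dY Hj _; apply: leIr|apply: dZ HZ _; apply: leIl].
  by have := Hx _ Hv; rewrite meetA meetxx.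
- move=> Hx; split.
  + move=> y [Hy1 Hy2]; apply: Hx; split.
    * by move: y Hy1 {Hy2}; apply: perp_anti => z [].
    * by move: y Hy2 {Hy1}; apply: perp_anti => z [].
  + rewrite -(cvalP Z) => t Ht; apply: Hx; split;
      by move: t Ht; apply: perp_anti => z [].
Qed.
Fact cmeetxx : idempotent_op cmeet.
Proof. by move=> X; apply: compE => x /=; tauto. Qed.

HB.instance Definition _ := Order.isMeetJoinDistrLattice.Build cdisp Comp
  cle_def clt_def cmeetC cjoinC cmeetA cjoinA cjoinKI cmeetKU cmeetUl cmeetxx.

Lemma cleE (X Y : Comp) : X <= Y <-> sub (cval X) (cval Y).
Proof.
rewrite /Order.le /=; split.
- by move/eqP => <- x /= [].
- by move=> H; apply/eqP/compE => x /=; split; [case|move=> Hx; split => //; apply: H].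
Qed.

Fact cle0x (X : Comp) : cbot <= X.
Proof.
apply/cleE => x /= Hx.
have -> : x = \bot by have := Hx x I; rewrite meetxx.
exact: reg_bot (cvalP X).
Qed.
Fact clex1 (X : Comp) : X <= ctop.
Proof. by apply/cleE. Qed.

HB.instance Definition _ := Order.hasBottom.Build cdisp Comp cle0x.
HB.instance Definition _ := Order.hasTop.Build cdisp Comp clex1.

Fact cjoinxC (X : Comp) : X `|` ccompl X = \top.
Proof.
apply: compE => x /=; split => // _ y [H1 H2].
have : y `&` y = \bot by apply: H2.
by rewrite meetxx => ->; rewrite meetx0.
Qed.
Fact cmeetxC (X : Comp) : X `&` ccompl X = \bot.
Proof.
apply: compE => x /=; split.
- by move=> [H1 H2] y _; have := H2 x H1; rewrite meetxx => ->; rewrite meet0x.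
- move=> H; have : x = \bot by have := H x I; rewrite meetxx.
  by move=> ->; split; [apply: reg_bot (cvalP X)|apply: perp_bot].
Qed.

HB.instance Definition _ :=
  Order.TBDistrLattice_hasComplement.Build cdisp Comp cjoinxC cmeetxC.

Lemma cval_meet (X Y : Comp) x : cval (X `&` Y) x <-> cval X x /\ cval Y x.
Proof. by []. Qed.
Lemma cval_compl (X : Comp) x : cval (~` X) x <-> perp (cval X) x.
Proof. by []. Qed.
Lemma cval_bot x : cval \bot x <-> x = \bot.
Proof.
split => [H|->]; last by move=> y; rewrite meet0x.
by have := H x I; rewrite meetxx.
Qed.

Lemma comp_complete : complete_ba Comp.
Proof.
move=> S.
pose U := fun x => exists X, S X /\ cval X x.
exists (mkC (perp_reg (perp U))); split.
- move=> X HX; apply/cleE => x Hx /=; apply: perp_ext; by exists X.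
- move=> Z HZ; apply/cleE => x /=; rewrite -(cvalP Z); move: x.
  apply: perp_anti; apply: perp_anti => x [X [HX Hx]].
  by move: (HZ X HX) => /cleE; apply.
Qed.

Lemma down_reg (a : A) : regular (fun x => x <= a).
Proof.
apply: setE; last exact: perp_ext.
move=> x Hx; rewrite -(complK a); apply/disjC; apply: Hx.
by move=> y Hy; rewrite meetC; apply/disjC; rewrite complK.
Qed.

Definition cj (a : A) : Comp := mkC (down_reg a).

Lemma cj_compl a : cj (~` a) = ~` cj a.
Proof.
apply: compE => x /=; split.
- move=> H y Hy; apply: le0; rewrite -(meetCx a); exact: leI2.
- by move=> H; apply/disjC; apply: H.
Qed.

Lemma cj_meet a b : cj (a `&` b) = cj a `&` cj b.
Proof. by apply: compE => x /=; rewrite lexI; split; [move/andP|move=> [-> ->]]. Qed.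

Lemma cj_hom : ba_hom cj.
Proof.
split.
- exact: cj_meet.
- by move=> a b; apply: compl_inj; rewrite -cj_compl !complU cj_meet !cj_compl.
- exact: cj_compl.
- apply: compE => x; rewrite cval_bot /= lex0; by split => [/eqP|->].
- by apply: compE => x /=; rewrite lex1.
Qed.

Lemma cj_inj : injective cj.
Proof.
move=> a b E; have H1 : cval (cj a) a by rewrite /= lexx.
have H2 : cval (cj b) b by rewrite /= lexx.
rewrite E in H1; rewrite -E in H2; apply: le_anti; by rewrite H1 H2.
Qed.

Lemma cj_dense (X : Comp) : X <> \bot -> exists z, z <> \bot /\ cj z <= X.
Proof.
move=> HX.
have [z [Hz Hz0]] : exists z, cval X z /\ z <> \bot.
  apply: NNPP => H; apply: HX; apply: compE => x; rewrite cval_bot; split.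
  - by move=> Hx; apply: NNPP => Hx0; apply: H; exists x.
  - by move=> ->; apply: reg_bot (cvalP X).
exists z; split => //; apply/cleE => x /= Hx; exact: reg_down (cvalP X) Hz Hx.
Qed.
End Completion.

Lemma lub_unique {d} {B : ctbDistrLatticeType d} (S : B -> Prop) x x' :
  is_lub S x -> is_lub S x' -> x = x'.
Proof. by move=> [H1 H2] [H3 H4]; apply: le_anti; rewrite H2 ?H4. Qed.

Lemma compl_unique {d} {B : ctbDistrLatticeType d} (a b : B) :
  a `&` b = \bot -> a `|` b = \top -> b = ~` a.
Proof.
move=> H1 H2.
have E1 : b = b `&` ~` a.
  by rewrite -[LHS]meetx1 -(joinxC a) meetUr meetC H1 join0x.
have E2 : ~` a = ~` a `&` b.
  by rewrite -[LHS]meetx1 -H2 meetUr meetCx join0x.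
by transitivity (b `&` ~` a); [exact: E1|rewrite meetC -E2].
Qed.

Definition sup {d} {B : ctbDistrLatticeType d} (hB : complete_ba B) (S : B -> Prop) : B :=
  proj1_sig (cid (hB S)).
Lemma supP {d} {B : ctbDistrLatticeType d} (hB : complete_ba B) S :
  is_lub S (sup hB S).
Proof. exact: (proj2_sig (cid (hB S))). Qed.

Section Iso.
Context {dA dX dY : Order.disp_t} {A : ctbDistrLatticeType dA}
  {X : ctbDistrLatticeType dX} {Y : ctbDistrLatticeType dY}
  (jX : A -> X) (jY : A -> Y) (hX : ba_hom jX) (hY : ba_hom jY)
  (iX : injective jX) (iY : injective jY)
  (dnX : forall x : X, x <> \bot -> exists z, z <> \bot /\ jX z <= x)
  (cY : complete_ba Y).

Definition phi (x : X) : Y := sup cY (fun w => exists a, jX a <= x /\ w = jY a).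

Lemma phi_gen a x : jX a <= x -> jY a <= phi x.
Proof. move=> H; case: (supP cY (fun w => exists a, jX a <= x /\ w = jY a)) => H1 _.
by apply: H1; exists a. Qed.

Lemma phi_le x y : x <= y -> phi x <= phi y.
Proof.
move=> H; case: (supP cY (fun w => exists a, jX a <= x /\ w = jY a)) => _ H2.
apply: H2 => w [a [Ha ->]]; apply: phi_gen; exact: le_trans H.
Qed.

Lemma phi_j a : phi (jX a) = jY a.
Proof.
apply: (lub_unique (supP cY _)); split.
- move=> w [b [Hb ->]]; apply: (hom_le hY); move: Hb; apply: (hom_refl0 hX); exact: (inj_hom0 hX iX).
- by move=> z; apply; exists a.
Qed.

Lemma phi_refl b x : jY b <= phi x -> jX b <= x.
Proof.
move=> H; apply: NNPP => Hn.
have Hne : jX b `&` ~` x <> \bot.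
  by move=> E; apply: Hn; rewrite -meet_compl_le E.
have [c [Hc0 Hc]] := dnX Hne.
have Hcb : c <= b.
  apply: (hom_refl0 hX (inj_hom0 hX iX)); exact: le_trans Hc (leIl _ _).
have Hup : phi x <= ~` jY c.
  case: (supP cY (fun w => exists a, jX a <= x /\ w = jY a)) => _ H2.
  apply: H2 => w [a [Ha ->]]; rewrite lexC; apply/disjC.
  rewrite -(hom_meet hY); rewrite -(hom0 hY); congr jY.
  apply: (inj_hom0 hX iX); apply: le0; rewrite (hom_meet hX).
  rewrite -(meetCx x); apply: leI2; [exact: le_trans Hc (leIr _ _)|exact: Ha].
have : jY c <= ~` jY c.
  apply: le_trans Hup; apply: le_trans H; exact: hom_le.
rewrite -disjC meetxx => /(inj_hom0 hY iY); exact: Hc0.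
Qed.

Lemma dense_lub x : is_lub (fun w => exists a, jX a <= x /\ w = jX a) x.
Proof.
split; first by move=> w [a [Ha ->]].
move=> z Hz; apply: NNPP => Hn.
have Hne : x `&` ~` z <> \bot by move=> E; apply: Hn; rewrite -meet_compl_le E.
have [c [Hc0 Hc]] := dnX Hne.
have H1 : jX c <= z by apply: Hz; exists c; split => //; exact: le_trans Hc (leIl _ _).
have H2 : jX c <= ~` z by exact: le_trans Hc (leIr _ _).
apply: Hc0; apply: (inj_hom0 hX iX); apply: le0; rewrite -(meetxC z).
by rewrite -(meetxx (jX c)); apply: leI2.
Qed.
End Iso.

Lemma completion_iso {dA dX dY : Order.disp_t} {A : ctbDistrLatticeType dA}
  {X : ctbDistrLatticeType dX} {Y : ctbDistrLatticeType dY}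
  (jX : A -> X) (jY : A -> Y) (hX : ba_hom jX) (hY : ba_hom jY)
  (iX : injective jX) (iY : injective jY)
  (dnX : forall x : X, x <> \bot -> exists z, z <> \bot /\ jX z <= x)
  (dnY : forall x : Y, x <> \bot -> exists z, z <> \bot /\ jY z <= x)
  (cX : complete_ba X) (cY : complete_ba Y) :
  exists f : X -> Y, [/\ ba_hom f, bijective f & forall a, f (jX a) = jY a].
Proof.
pose f := phi jX jY cY; pose g := phi jY jX cX.
have fg : cancel f g.
  move=> x; rewrite /g /phi.
  have -> : (fun w => exists a, jY a <= f x /\ w = jX a) =
            (fun w => exists a, jX a <= x /\ w = jX a).
    apply: funext => w; apply: propext; split => -[a [Ha ->]]; exists a; split => //.
    + exact: (phi_refl hX hY iX iY dnX Ha).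
    + exact: phi_gen.
  by apply: lub_unique (supP cX _) (dense_lub hX iX dnX x).
have gf : cancel g f.
  move=> y; rewrite /f /phi.
  have -> : (fun w => exists a, jX a <= g y /\ w = jY a) =
            (fun w => exists a, jY a <= y /\ w = jY a).
    apply: funext => w; apply: propext; split => -[a [Ha ->]]; exists a; split => //.
    + exact: (phi_refl hY hX iY iX dnY Ha).
    + exact: phi_gen.
  by apply: lub_unique (supP cY _) (dense_lub hY iY dnY y).
have fle : forall x y, x <= y -> f x <= f y by move=> *; apply: phi_le.
have gle : forall x y, x <= y -> g x <= g y by move=> *; apply: phi_le.
have fmeet : forall x y, f (x `&` y) = f x `&` f y.
  move=> x y; apply: le_anti; rewrite lexI !fle ?leIl ?leIr //=.
  rewrite -[X in X <= _]gf; apply: fle; rewrite lexI; apply/andP; split.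
  - by apply: (le_trans (gle _ _ (leIl _ _))); rewrite fg.
  - by apply: (le_trans (gle _ _ (leIr _ _))); rewrite fg.
have fjoin : forall x y, f (x `|` y) = f x `|` f y.
  move=> x y; apply: le_anti; apply/andP; split; last first.
    by rewrite leUx !fle ?leUl ?leUr.
  rewrite -[X in _ <= X]gf; apply: fle; rewrite leUx; apply/andP; split.
  - by apply: (le_trans _ (gle _ _ (leUl _ _))); rewrite fg.
  - by apply: (le_trans _ (gle _ _ (leUr _ _))); rewrite fg.
have f0 : f \bot = \bot by rewrite -(hom0 hX) /f (phi_j hX hY iX) (hom0 hY).
have f1 : f \top = \top by rewrite -(hom1 hX) /f (phi_j hX hY iX) (hom1 hY).
exists f; split.
- split => //.
  move=> x; apply: compl_unique; first by rewrite -fmeet meetxC.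
  by rewrite -fjoin joinxC.
- by exists g.
- by move=> a; apply: (phi_j hX hY iX).
Qed.

Section Filters.
Context {d : Order.disp_t} {B : ctbDistrLatticeType d}.
Lemma filter_meets (D : B -> Prop) (T : Type) (F : T -> B) r :
  is_filter D -> (forall i, List.In i r -> D (F i)) -> D (\meet_(i <- r) F i).
Proof.
move=> [D1 D2 D3]; elim: r => [|x r IH] H; first by rewrite big_nil.
rewrite big_cons; apply: D3; [apply: H; left|apply: IH => i Hi; apply: H; right] => //.
Qed.

Lemma gen_filter_filter (G : B -> Prop) : is_filter (gen_filter G).
Proof.
split.
- by exists [::]; split => //; rewrite big_nil.
- by move=> x y [u [Hu Hl]] le; exists u; split => //; apply: le_trans le.
- move=> x y [u [Hu Hl]] [v [Hv Hl']]; exists (u ++ v); split.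
  + by move=> g Hg; case: (List.in_app_or _ _ _ Hg) => [/Hu|/Hv].
  + by rewrite big_cat /=; apply: leI2.
Qed.

Lemma gen_filter_gen (G : B -> Prop) x : G x -> gen_filter G x.
Proof. by move=> H; exists [:: x]; split => [g [<-|]|] //; rewrite big_seq1. Qed.
End Filters.

Section Ext.
Context (K1 K2 : Type) {dm : Order.disp_t} {Bm : ctbDistrLatticeType dm}
  (a : K1 + K2 -> K1 + K2 -> Bm).

Definition pairA (s t : K1 + K2) : Bm :=
  match s, t with inl _, inr _ => a s t | _, _ => \top end.
Definition piA (P : seq (K1 + K2)) : Bm :=
  \meet_(s <- P) \meet_(t <- P) pairA s t.

Lemma piA_le P s t : List.In s P -> List.In t P -> piA P <= pairA s t.
Proof.
move=> Hs Ht; apply: le_trans (bigmeet_le _ Hs) _; exact: bigmeet_le.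
Qed.

Lemma le_piA P z : (forall s t, List.In s P -> List.In t P -> z <= pairA s t) -> z <= piA P.
Proof. by move=> H; apply: le_bigmeet => s Hs; apply: le_bigmeet => t Ht; apply: H. Qed.

Lemma piA_nil : piA [::] = \top. Proof. by rewrite /piA big_nil. Qed.

Lemma piA_sub P Q : (forall s, List.In s P -> List.In s Q) -> piA Q <= piA P.
Proof. by move=> H; apply: le_piA => s t Hs Ht; apply: piA_le; apply: H. Qed.

Context {d0 : Order.disp_t} {B0 : ctbDistrLatticeType d0}
  (e : Bm -> B0) (y : K1 + K2 -> B0) (he : ba_hom e)
  (hrel : forall x1 x2, y (inl x1) `&` y (inr x2) <= e (a (inl x1) (inr x2)))
  (huniv : forall (dC : Order.disp_t) (C : ctbDistrLatticeType dC)
              (g : Bm -> C) (z : K1 + K2 -> C), ba_hom g ->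
         (forall x1 x2, z (inl x1) `&` z (inr x2) <= g (a (inl x1) (inr x2))) ->
         exists k : B0 -> C, [/\ ba_hom k, (forall x, k (e x) = g x) &
                                 (forall s, k (y s) = z s)]).

Definition yP (P : seq (K1 + K2)) : B0 := \meet_(s <- P) y s.
Definition yN (N : seq (K1 + K2)) : B0 := \meet_(s <- N) ~` y s.
Definition basic c P N := e c `&` yP P `&` yN N.

Lemma yP_cat P Q : yP (P ++ Q) = yP P `&` yP Q.
Proof. by rewrite /yP big_cat. Qed.
Lemma yN_cat P Q : yN (P ++ Q) = yN P `&` yN Q.
Proof. by rewrite /yN big_cat. Qed.

Lemma yP_pi P : yP P <= e (piA P).
Proof.
rewrite /piA (hom_meets he); apply: le_bigmeet => s Hs.
rewrite (hom_meets he); apply: le_bigmeet => t Ht.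
case: s Hs => [x1|x2] Hs; case: t Ht => [y1|y2] Ht /=; rewrite ?(hom1 he) ?lex1 //.
apply: le_trans (hrel x1 y2); rewrite lexI; apply/andP; split; exact: bigmeet_le.
Qed.

Lemma ba_hom_id {dd} {C : ctbDistrLatticeType dd} : ba_hom (@id C).
Proof. by []. Qed.

Lemma basic_refl c P N : (forall s, List.In s P -> ~ List.In s N) ->
  basic c P N = \bot -> c `&` piA P = \bot.
Proof.
move=> disj H0.
pose z := fun s => if pselect (List.In s P) then c `&` piA P else \bot.
have hz : forall x1 x2, z (inl x1) `&` z (inr x2) <= a (inl x1) (inr x2).
  move=> x1 x2; rewrite /z; case: pselect => H1; case: pselect => H2;
    rewrite ?meet0x ?meetx0 ?le0x //.
  apply: le_trans (leIl _ _) _; apply: le_trans (leIr _ _) _.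
  exact: (piA_le H1 H2).
have [k [hk ke ky]] := huniv (g := id) ba_hom_id hz.
have := congr1 k H0; rewrite (hom0 hk) /basic !(hom_meet hk) ke /yP /yN.
rewrite !(hom_meets hk) => E; apply: le0; rewrite -E.
rewrite !lexI leIl /=; apply/andP; split.
- apply: le_bigmeet => s Hs; rewrite ky /z; case: pselect => // _; exact: lexx.
- apply: le_bigmeet => s Hs; rewrite (hom_compl hk) ky /z; case: pselect => H.
  + by case: (disj _ H Hs).
  + by rewrite compl0 lex1.
Qed.

Lemma basic_nz c P N : basic c P N <> \bot ->
  (forall s, List.In s P -> ~ List.In s N) /\ c `&` piA P <> \bot.
Proof.
move=> H; split.
- move=> s HP HN; apply: H; apply: le0; rewrite -(meetxC (y s)) /basic.
  apply: leI2; first (apply: le_trans (leIr _ _) _; rewrite /yP).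
  + exact: (bigmeet_le y HP).
  + exact: (bigmeet_le (fun s => ~` y s) HN).
- move=> E; apply: H; apply: le0; rewrite -(hom0 he) -E (hom_meet he) /basic.
  apply: le_trans (leIl _ _) _; apply: leI2 => //; exact: yP_pi.
Qed.

Lemma e_inj0 x : e x = \bot -> x = \bot.
Proof.
move=> E; have := basic_refl (c:=x) (P:=[::]) (N:=[::]) (fun _ _ H => H).
rewrite piA_nil meetx1; apply; by rewrite /basic E !meet0x.
Qed.

Lemma e_le_refl x x' : e x <= e x' -> x <= x'.
Proof. exact: (hom_refl0 he e_inj0). Qed.

Definition NF (z : B0) := exists L : seq (Bm * seq (K1 + K2) * seq (K1 + K2)),
  z = \join_(t <- L) basic t.1.1 t.1.2 t.2.

Lemma NF0 : NF \bot. Proof. by exists [::]; rewrite big_nil. Qed.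
Lemma NFU z z' : NF z -> NF z' -> NF (z `|` z').
Proof. by move=> [L ->] [L' ->]; exists (L ++ L'); rewrite big_cat. Qed.
Lemma NF_basic c P N : NF (basic c P N).
Proof. by exists [:: (c, P, N)]; rewrite big_seq1. Qed.
Lemma NF_joins (T : Type) (F : T -> B0) r : (forall i, List.In i r -> NF (F i)) ->
  NF (\join_(i <- r) F i).
Proof.
elim: r => [|x r IH] H; first by rewrite big_nil; exact: NF0.
rewrite big_cons; apply: NFU; [apply: H; left|apply: IH => i Hi; apply: H; right] => //.
Qed.
Lemma basic_meet c P N c' P' N' :
  basic c P N `&` basic c' P' N' = basic (c `&` c') (P ++ P') (N ++ N').
Proof.
rewrite /basic (hom_meet he) yP_cat yN_cat.
by rewrite meetACA [X in X `&` _]meetACA.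
Qed.
Lemma NFI_basic c P N z : NF z -> NF (basic c P N `&` z).
Proof.
move=> [L ->]; rewrite meetC bigjoin_meetl; apply: NF_joins => t _.
rewrite meetC basic_meet; exact: NF_basic.
Qed.
Lemma NFI z z' : NF z -> NF z' -> NF (z `&` z').
Proof.
move=> [L ->] Hz'; rewrite bigjoin_meetl; apply: NF_joins => t _.
exact: NFI_basic.
Qed.
Lemma NF1 : NF \top.
Proof.
exists [:: (\top, [::], [::])]; rewrite big_seq1 /basic /yP /yN !big_nil (hom1 he).
by rewrite !meetx1.
Qed.
Lemma NF_meets (T : Type) (F : T -> B0) r : (forall i, List.In i r -> NF (F i)) ->
  NF (\meet_(i <- r) F i).
Proof.
elim: r => [|x r IH] H; first by rewrite big_nil; exact: NF1.
rewrite big_cons; apply: NFI; [apply: H; left|apply: IH => i Hi; apply: H; right] => //.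
Qed.
Lemma basic_y s : basic \top [:: s] [::] = y s.
Proof. by rewrite /basic /yP /yN big_seq1 big_nil (hom1 he) meet1x meetx1. Qed.
Lemma basic_ny s : basic \top [::] [:: s] = ~` y s.
Proof. by rewrite /basic /yP /yN big_seq1 big_nil (hom1 he) meet1x meet1x. Qed.
Lemma basic_e c : basic c [::] [::] = e c.
Proof. by rewrite /basic /yP /yN !big_nil !meetx1. Qed.

Lemma NFC z : NF z -> NF (~` z).
Proof.
move=> [L ->]; rewrite compl_joins; apply: NF_meets => t _.
rewrite /basic !complI; apply: NFU; [apply: NFU|].
- rewrite -(hom_compl he) -basic_e; exact: NF_basic.
- rewrite /yP compl_meets; apply: NF_joins => s _; rewrite -basic_ny; exact: NF_basic.
- rewrite /yN compl_meets; apply: NF_joins => s _; rewrite complK -basic_y; exact: NF_basic.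
Qed.

Hypothesis hgen : generated_by (fun z => (exists x, z = e x) \/ (exists s, z = y s)).

Lemma NF_all z : NF z.
Proof.
apply: hgen z.
- move=> z [[x ->]|[s ->]]; [rewrite -basic_e|rewrite -basic_y]; exact: NF_basic.
- exact: NF0.
- exact: NF1.
- exact: NFI.
- exact: NFU.
- exact: NFC.
Qed.

Lemma basic_below z : z <> \bot ->
  exists c P N, basic c P N <> \bot /\ basic c P N <= z.
Proof.
move=> Hz; have [L E] := NF_all z.
apply: NNPP => Hn; apply: Hz; rewrite E; apply: le0; apply: bigjoin_le => t Ht.
rewrite lex0; apply/eqP; apply: NNPP => Hb; apply: Hn; exists t.1.1, t.1.2, t.2; split => //.
rewrite E; exact: (le_bigjoin (fun t => basic t.1.1 t.1.2 t.2) Ht).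
Qed.

Context {dn : Order.disp_t} {Bn : ctbDistrLatticeType dn} (j : B0 -> Bn)
  (hj : ba_hom j) (ij : injective j)
  (dj : forall x : Bn, x <> \bot -> exists z : B0, z <> \bot /\ j z <= x).

Definition hh (x : Bm) : Bn := j (e x).

Lemma hh_hom : ba_hom hh.
Proof. exact: hom_comp he hj. Qed.
Lemma j_refl z z' : j z <= j z' -> z <= z'.
Proof. exact: (hom_refl0 hj (inj_hom0 hj ij)). Qed.
Lemma hh_inj : injective hh.
Proof.
move=> x x' E; apply: le_anti; apply/andP; split; apply: e_le_refl; apply: j_refl;
  by rewrite /hh in E; rewrite E.
Qed.

Definition gens (Dm : Bm -> Prop) :=
  (fun w => (exists v, Dm v /\ w = hh v) \/ (exists s, w = j (y s))).

Lemma extract (Dm : Bm -> Prop) (fm : is_filter Dm) w :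
  gen_filter (gens Dm) w -> exists dd P, Dm dd /\ hh dd `&` j (yP P) <= w.
Proof.
move=> [u [Hu Hl]].
suff [dd [P [H1 H2]]] : exists dd P, Dm dd /\ hh dd `&` j (yP P) <= \meet_(g <- u) g.
  by exists dd, P; split => //; apply: le_trans Hl.
elim: u Hu {Hl} => [|g u IH] Hu.
  exists \top, [::]; split; first by case: fm.
  by rewrite big_nil lex1.
have [dd [P [H1 H2]]] := IH (fun g Hg => Hu g (or_intror Hg)).
case: (Hu g (or_introl erefl)) => [[v [Hv ->]]|[s ->]].
- exists (v `&` dd), P; split; first by case: fm => _ _; apply.
  rewrite big_cons (hom_meet hh_hom) -meetA lexI leIl /=.
  by apply: le_trans (leIr _ _) H2.
- exists dd, (s :: P); split => //.
  rewrite big_cons /yP big_cons (hom_meet hj) lexI; apply/andP; split.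
  + by apply: le_trans (leIr _ _) _; apply: leIl.
  + apply: le_trans H2; apply: leI2 => //; exact: leIr.
Qed.

Lemma DX dd P x : hh dd `&` j (yP P) <= hh x -> dd `&` piA P <= x.
Proof.
move=> H.
have H1 : e dd `&` yP P <= e x by apply: j_refl; rewrite (hom_meet hj).
have : basic (dd `&` ~` x) P [::] = \bot.
  rewrite /basic /yN big_nil meetx1 (hom_meet he) (hom_compl he).
  apply: le0; rewrite -(meetxC (e x)) meetAC; exact: leI2.
move=> H0; have E := basic_refl (N:=[::]) (fun _ _ H => H) H0.
by rewrite -meet_compl_le; apply/eqP; rewrite -E meetAC.
Qed.

Lemma key_ineq dd1 P1 dd2 P2 w1 w2 r :
  hh dd1 `&` j (yP P1) <= w1 -> hh dd2 `&` j (yP P2) <= w2 -> w1 `&` w2 <= hh r ->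
  dd1 `&` dd2 `&` piA (P1 ++ P2) <= r.
Proof.
move=> H1 H2 H3; apply: DX; apply: le_trans H3.
rewrite (hom_meet hh_hom) yP_cat (hom_meet hj).
apply: le_trans _ (leI2 H1 H2).
by rewrite -!meetA; apply: leI2 => //; rewrite meetCA; apply: leI2 => //.
Qed.
End Ext.

Local Close Scope order_scope.

Lemma card_le_trans A B C : card_le A B -> card_le B C -> card_le A C.
Proof. by move=> [f hf] [g hg]; exists (g \o f); apply: inj_comp. Qed.

Lemma SB A B : card_le A B -> card_le B A -> equinumerous A B.
Proof.
move=> [f hf] [g hg].
pose D a := exists n a0, (~ exists b, g b = a0) /\ a = iter n (g \o f) a0.
pose h a := match pselect (exists b, g b = a) with
  | left H => if pselect (D a) then f a else proj1_sig (cid H)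
  | right _ => f a end.
have hD : forall a, ~ (exists b, g b = a) -> D a.
  by move=> a Ha; exists 0, a.
have hND : forall a (H : exists b, g b = a), ~ D a -> g (h a) = a.
  move=> a H ND; rewrite /h; destruct (pselect (exists b, g b = a)) as [H'|H'] => //.
  destruct (pselect (D a)) => //; exact: proj2_sig (cid H').
have hYD : forall a, D a -> h a = f a.
  move=> a Da; rewrite /h; destruct (pselect (exists b, g b = a)) as [H'|H'] => //.
  by destruct (pselect (D a)).
have h_inj : injective h.
  move=> a a' E.
  case: (classic (D a)) => Da; case: (classic (D a')) => Da'.
  - by apply: hf; rewrite -hYD // -(hYD a') // E.
  - exfalso; apply Da'.
    have Hg : exists b, g b = a' by apply: NNPP => H; apply: Da'; exact: hD.
    have E2 : a' = g (f a) by rewrite -(hND a' Hg Da') -E hYD.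
    case: Da => n [a0 [Ha0 Ea]]; exists n.+1, a0; split => //; by rewrite E2 iterS Ea.
  - exfalso; apply Da.
    have Hg : exists b, g b = a by apply: NNPP => H; apply: Da; exact: hD.
    have E2 : a = g (f a') by rewrite -(hND a Hg Da) E hYD.
    case: Da' => n [a0 [Ha0 Ea]]; exists n.+1, a0; split => //; by rewrite E2 iterS Ea.
  - have Hg : exists b, g b = a by apply: NNPP => H; apply: Da; exact: hD.
    have Hg' : exists b, g b = a' by apply: NNPP => H; apply: Da'; exact: hD.
    by rewrite -(hND a Hg Da) -(hND a' Hg' Da') E.
have h_surj : forall b, exists a, h a = b.
  move=> b; case: (classic (D (g b))) => Db.
  - case: Db => n [a0 [Ha0 E]].
    case: n E => [|n] /= E; first by exfalso; apply: Ha0; exists b.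
    move/hg: E => E.
    exists (iter n (g \o f) a0); rewrite hYD // ?E //.
    by exists n, a0.
  - exists (g b); apply: hg; rewrite hND //; by exists b.
pose hi b := proj1_sig (cid (h_surj b)).
have hiK : cancel hi h by move=> b; exact: proj2_sig (cid (h_surj b)).
exists h; exists hi => // a; apply: h_inj; by rewrite hiK.
Qed.

Section Regular.
Context (T : Type) (ltT : rel T) (hT : inf_reg_card ltT).

Definition unbounded (U : T -> Prop) := forall x, exists y, U y /\ ~~ ltT y x.

Lemma ltT_irr x : ~~ ltT x x. Proof. by case: hT => H _; apply: H. Qed.
Lemma ltT_trans x y z : ltT x y -> ltT y z -> ltT x z.
Proof. by case: hT => _ [H _]; apply: H. Qed.
Lemma ltT_total x y : x <> y -> ltT x y \/ ltT y x.
Proof. by case: hT => _ [_ [H _]]; apply: H. Qed.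
Lemma ltT_reg U : unbounded U -> exists f : T -> T, injective f /\ forall k, U (f k).
Proof. by case: hT => _ [_ [_ [_ [_ [_ H]]]]]; apply: H. Qed.
Lemma nat_le_T : card_le nat T.
Proof. by case: hT => _ [_ [_ [_ [H _]]]]. Qed.

Lemma unbounded_all : unbounded (fun _ => True).
Proof. by move=> x; exists x; split => //; exact: ltT_irr. Qed.

Lemma not_unbounded U : ~ unbounded U -> exists b, forall t, U t -> ltT t b.
Proof.
move=> H; apply: NNPP => H'; apply: H => x; apply: NNPP => Hx; apply: H'.
exists x => t Ht; apply: NNPP => Hl; apply: Hx; exists t; split => //.
by apply/negP => Hl'; apply: Hl.
Qed.

Lemma unbounded_fiber (X : Type) (hX : ~ card_le T X) (F : T -> X) U :
  unbounded U -> exists x, unbounded (fun t => U t /\ F t = x).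
Proof.
move=> hU; apply: NNPP => Hn.
have Hb : forall x, exists b, forall t, U t /\ F t = x -> ltT t b.
  by move=> x; apply: not_unbounded => Hx; apply: Hn; exists x.
have [beta Hbeta] := choice Hb.
case: (classic (unbounded (fun w => exists x, beta x = w))) => Hr.
- have [phi [phii Hphi]] := ltT_reg Hr.
  have [psi Hpsi] := choice Hphi.
  apply: hX; exists psi => k k' E; apply: phii; by rewrite -Hpsi -(Hpsi k') E.
- have [g Hg] := not_unbounded Hr.
  have [t [Ut Ht]] := hU g.
  have H1 := Hbeta (F t) t (conj Ut erefl).
  have H2 := Hg (beta (F t)) (ex_intro _ _ erefl).
  by move: Ht; rewrite (ltT_trans H1 H2).
Qed.

Lemma seq_fiber (X : Type) (hX1 : ~ card_le T X) (hX2 : card_le nat X)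
  (F : T -> seq X) U : unbounded U -> exists p, unbounded (fun t => U t /\ F t = p).
Proof.
move=> hU.
have hN : ~ card_le T nat by move=> H; apply: hX1; exact: card_le_trans H hX2.
have [n Hn] := unbounded_fiber hN (fun t => size (F t)) hU.
have [f0 _] := hX2; pose x0 := f0 0.
have main : forall i, exists U', unbounded U' /\
    (forall t, U' t -> U t /\ size (F t) = n) /\
    exists p, forall t, U' t -> take i (F t) = p.
  elim => [|i [U' [HU' [Hsub [p Hp]]]]].
  - exists (fun t => U t /\ size (F t) = n); split => //; split => //.
    by exists [::] => t _; rewrite take0.
  - have [x Hx] := unbounded_fiber hX1 (fun t => nth x0 (F t) i) HU'.
    exists (fun t => U' t /\ nth x0 (F t) i = x); split => //; split.
      by move=> t [Ht _]; apply: Hsub.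
    exists (if i < n then rcons p x else p) => t [Ht Hxt].
    have [_ Hs] := Hsub t Ht.
    case: ltnP => Hin.
    + by rewrite (take_nth x0) ?Hs // Hp // Hxt.
    + rewrite -(Hp t Ht) !take_oversize // Hs //; exact: leqW.
have [U' [HU' [Hsub [p Hp]]]] := main n.
exists p => x; have [t [Ht Hl]] := HU' x; exists t; split => //.
split; first by case: (Hsub t Ht).
by rewrite -(Hp t Ht) -(proj2 (Hsub t Ht)) take_size.
Qed.
End Regular.

Lemma bounded_sub (T K : Type) (ltT : rel T) (ltK : rel K)
  (hT : inf_reg_card ltT) (hK : inf_reg_card ltK) (hne : ~ equinumerous T K)
  (F : T -> K) U : unbounded ltT U ->
  exists U', unbounded ltT U' /\ (forall t, U' t -> U t) /\
    exists m, forall t, U' t -> ltK (F t) m \/ F t = m.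
Proof.
move=> hU.
case: (classic (exists m, forall t, U t -> ltK (F t) m \/ F t = m)) => Hm.
  by exists U; split => //; split.
have Hr : unbounded ltK (fun k => exists t, U t /\ F t = k).
  move=> m; apply: NNPP => H; apply: Hm; exists m => t Ut.
  apply: NNPP => Hn; apply: H; exists (F t); split; first by exists t.
  apply/negP => Hl; apply: Hn; by left.
have [phi [phii Hphi]] := ltT_reg hK Hr.
have [psi Hpsi] := choice Hphi.
have hKT : card_le K T.
  exists psi => k k' E; apply: phii.
  by rewrite -(proj2 (Hpsi k)) -(proj2 (Hpsi k')) E.
have hTK : ~ card_le T K by move=> H; apply: hne; exact: SB.
have [x Hx] := unbounded_fiber hT hTK F hU.
exists (fun t => U t /\ F t = x); split => //; split; first by move=> t [].
by exists x => t [_ ->]; right.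
Qed.

Local Open Scope order_scope.

Section Ilt.
Context (K1 K2 : Type) (lt1 : rel K1) (lt2 : rel K2)
  (h1 : inf_reg_card lt1) (h2 : inf_reg_card lt2).
Notation Ilt := (I_lt lt1 lt2).

Lemma Ilt_irr s : Ilt s s = false.
Proof. by case: s => x /=; apply/negbTE; apply: ltT_irr. Qed.

Lemma Ilt_trans s t r : Ilt s t -> Ilt t r -> Ilt s r.
Proof.
case: s => x; case: t => y; case: r => z //=.
- exact: ltT_trans.
- by move=> H1 H2; exact: ltT_trans H2 H1.
Qed.

Lemma Ilt_asym s t : Ilt s t -> Ilt t s = false.
Proof.
move=> H; apply/negbTE/negP => H'; have := Ilt_trans H H'; by rewrite Ilt_irr.
Qed.

Lemma moral_trans {d} {B : ctbDistrLatticeType d} (D : B -> Prop) a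
  (ha : moral_problem lt1 lt2 D a) s t r :
  Ilt s t -> Ilt t r -> a s t `&` a t r <= a s r.
Proof.
move=> Hst Htr; have Hsr := Ilt_trans Hst Htr.
have Hss := Ilt_irr s; have Htt := Ilt_irr t; have Hrr := Ilt_irr r.
have Hts := Ilt_asym Hst; have Hrt := Ilt_asym Htr; have Hrs := Ilt_asym Hsr.
have nst : s <> t by move=> E; move: Hst; rewrite E Htt.
have ntr : t <> r by move=> E; move: Htr; rewrite E Hrr.
have nsr : s <> r by move=> E; move: Hsr; rewrite E Hrr.
rewrite -meet_compl_le; apply/eqP; apply: NNPP => Hw.
pose tv := fun p q => if pselect (p = s /\ q = r) then false else true.
have ND : List.NoDup [:: s; t; r].
  constructor; first by move=> /= [E|[E|[]]]; [apply: nst|apply: nsr].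
  constructor; first by move=> /= [E|[]]; apply: ntr.
  constructor => //; constructor.
have Hne : \meet_(p <- [:: s; t; r]) \meet_(q <- [:: s; t; r] | Ilt p q)
       (if tv p q then a p q else ~` a p q) <> \bot.
  move=> E; apply: Hw; apply: le0; rewrite -E; apply: le_bigmeet => p Hp.
  rewrite big_mkcond /=; apply: le_bigmeet => q Hq.
  move: Hp Hq => /= [<-|[<-|[<-|[]]]] [<-|[<-|[<-|[]]]];
    rewrite ?Hst ?Htr ?Hsr ?Hss ?Htt ?Hrr ?Hts ?Hrt ?Hrs ?lex1 // /tv;
    case: pselect => [[E1 E2]|NE] //.
  all: try by [case: ntr|case: nst|case: nsr|case: NE].
  all: try by apply: leIr.
  all: try by apply: le_trans (leIl _ _) _; apply: leIl.
  all: try by apply: le_trans (leIl _ _) _; apply: leIr.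
case: ha => _ /(_ _ tv ND Hne) [f [_ Hf]].
have Tst : tv s t = true.
  by rewrite /tv; destruct (pselect (s = s /\ t = r)) as [[E0 E]|] => //; case: ntr.
have Ttr : tv t r = true.
  by rewrite /tv; destruct (pselect (t = s /\ r = r)) as [[E E0]|] => //; case: nst.
have Tsr : tv s r = false.
  by rewrite /tv; destruct (pselect (s = s /\ r = r)) as [|[]].
have Is : List.In s [:: s; t; r] by left.
have It : List.In t [:: s; t; r] by right; left.
have Ir : List.In r [:: s; t; r] by right; right; left.
have H1 := proj1 (Hf s t Is It Hst) Tst.
have H2 := proj1 (Hf t r It Ir Htr) Ttr.
have H3 : ~ (f s <= f r)%N by move/(proj2 (Hf s r Is Ir Hsr)); rewrite Tsr.
by apply: H3; apply: leq_trans H1 H2.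
Qed.
End Ilt.

Lemma list_max (K : Type) (lt : rel K) (hK : inf_reg_card lt) (k0 : K)
  (X : Type) (p : X -> option K) (Q : seq X) :
  exists m, forall t k, List.In t Q -> p t = Some k -> lt k m \/ k = m.
Proof.
elim: Q => [|t Q [m Hm]]; first by exists k0.
case E: (p t) => [k|]; last first.
  exists m => t' k' [<-|Ht]; [by rewrite E|exact: Hm].
case: (classic (lt k m \/ k = m)) => Hkm.
  exists m => t' k' [<-|Ht]; [rewrite E => -[<-] //|exact: Hm].
have Hmk : lt m k.
  case: (classic (k = m)) => Ekm; first by case: Hkm; right.
  case: (ltT_total hK Ekm) => // H; by case: Hkm; left.
exists k => t' k' [<-|Ht]; first by rewrite E => -[<-]; right.
move=> Hp; case: (Hm _ _ Ht Hp) => [H|->]; left; [exact: (ltT_trans hK H Hmk)|exact: Hmk].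
Qed.

Lemma le_or_trans (K : Type) (lt : rel K) (hK : inf_reg_card lt) a b c :
  lt a b \/ a = b -> lt b c \/ b = c -> lt a c \/ a = c.
Proof.
move=> [H1|E1] [H2|E2]; subst; [left; exact: (ltT_trans hK H1 H2)|by left|by left|by right].
Qed.

Section Part3.
Context (K1 K2 : Type) (lt1 : rel K1) (lt2 : rel K2)
  (h1 : inf_reg_card lt1) (h2 : inf_reg_card lt2)
  {dm : Order.disp_t} {Bm : ctbDistrLatticeType dm} (Dm : Bm -> Prop)
  (fm : is_filter Dm) (a : K1 + K2 -> K1 + K2 -> Bm)
  (ha : moral_problem lt1 lt2 Dm a).

Definition G1 (m : K1) (n : K2) (t : K1 + K2) : Bm :=
  match t with
  | inl k => if lt1 k m then a (inl k) (inl m) else \top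
  | inr k => if lt2 k n then a (inr n) (inr k) else \top end.
Definition G2 (m : K1) (n : K2) (t : K1 + K2) : Bm :=
  match t with inl k => a (inl k) (inr n) | inr k => a (inl m) (inr k) end.
Definition Bbd m n Q := piA a Q `&` \meet_(t <- Q) G1 m n t.
Definition Bfree m n Q := piA a Q `&` \meet_(t <- Q) G2 m n t.
Definition bnd m n (Q : seq (K1 + K2)) := forall t, List.In t Q ->
  match t with inl k => lt1 k m \/ k = m | inr k => lt2 k n \/ k = n end.

Lemma X_pair m n Q R s t : bnd m n Q ->
  List.In s Q \/ List.In s R -> List.In t Q \/ List.In t R ->
  Bbd m n Q `&` Bfree m n R <= pairA a s t.
Proof.
move=> hb Hs Ht.
case: s Hs => [k1|k2] Hs; case: t Ht => [l1|l2] Ht /=; rewrite ?lex1 //.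
have G1Q : forall s, List.In s Q -> Bbd m n Q `&` Bfree m n R <= G1 m n s.
  move=> s Hs'; apply: le_trans (leIl _ _) _; apply: le_trans (leIr _ _) _.
  exact: (bigmeet_le (G1 m n) Hs').
have G2R : forall s, List.In s R -> Bbd m n Q `&` Bfree m n R <= G2 m n s.
  move=> s Hs'; apply: le_trans (leIr _ _) _; apply: le_trans (leIr _ _) _.
  exact: (bigmeet_le (G2 m n) Hs').
case: Hs => Hs; case: Ht => Ht.
- apply: le_trans (leIl _ _) _; apply: le_trans (leIl _ _) _.
  exact: (piA_le a Hs Ht).
- have := G1Q _ Hs; have := G2R _ Ht => /= A2 A1.
  case: (hb _ Hs) => [Hk|E].
  + rewrite Hk in A1; apply: le_trans (moral_trans h1 h2 ha (s:=inl k1) (t:=inl m) (r:=inr l2) _ _) => //.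
    by rewrite lexI A1 A2.
  + by rewrite E.
- have := G1Q _ Ht; have := G2R _ Hs => /= A2 A1.
  case: (hb _ Ht) => [Hk|E].
  + rewrite Hk in A1; apply: le_trans (moral_trans h1 h2 ha (s:=inl k1) (t:=inr n) (r:=inr l2) _ _) => //.
    by rewrite lexI A1 A2.
  + by rewrite E.
- apply: le_trans (leIr _ _) _; apply: le_trans (leIl _ _) _.
  exact: (piA_le a Hs Ht).
Qed.

Lemma X_le m n Q R : bnd m n Q ->
  Bbd m n Q `&` Bfree m n R <= piA a (Q ++ R) /\
  Bbd m n Q `&` Bfree m n R <= piA a (R ++ Q).
Proof.
move=> hb; split; apply: le_piA => s t Hs Ht; apply: X_pair => //;
  case: (List.in_app_or _ _ _ Hs); case: (List.in_app_or _ _ _ Ht); tauto.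
Qed.

Lemma a_D s t : I_lt lt1 lt2 s t -> Dm (a s t).
Proof. by case: ha => H _; apply: H. Qed.

Lemma top_D : Dm \top. Proof. by case: fm. Qed.
Lemma meet_D x y : Dm x -> Dm y -> Dm (x `&` y). Proof. by case: fm => _ _; apply. Qed.

Lemma pi_D Q : Dm (piA a Q).
Proof.
apply: filter_meets => // s _; apply: filter_meets => // t _.
case: s => [k1|k2]; case: t => [l1|l2] /=; try exact: top_D; by apply: a_D.
Qed.

Lemma Bbd_D m n Q : Dm (Bbd m n Q).
Proof.
apply: meet_D; first exact: pi_D.
apply: filter_meets => // [[k|k]] _ /=.
- by case: ifP => H; [apply: a_D|exact: top_D].
- by case: ifP => H; [apply: a_D|exact: top_D].
Qed.

Lemma Bfree_D m n Q : Dm (Bfree m n Q).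
Proof.
apply: meet_D; first exact: pi_D.
by apply: filter_meets => // [[k|k]] _ /=; apply: a_D.
Qed.

Context (T1 T2 : Type) (lt1' : rel T1) (lt2' : rel T2)
  (hT1 : inf_reg_card lt1') (hT2 : inf_reg_card lt2')
  (a' : T1 + T2 -> T1 + T2 -> Bm) (ha' : moral_problem lt1' lt2' Dm a').

Lemma bound_side (T : Type) (ltT : rel T) (hT : inf_reg_card ltT)
  (n1 : ~ equinumerous T K1) (n2 : ~ equinumerous T K2) (P : T -> seq (K1 + K2)) :
  exists U, unbounded ltT U /\ exists m n, forall u, U u -> bnd m n (P u).
Proof.
have [f0 _] := nat_le_T h1; have [g0 _] := nat_le_T h2.
have Ex1 : forall x, exists m, forall t k, List.In t (P x) -> t = inl k -> lt1 k m \/ k = m.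
  move=> x.
  have [m Hm] := list_max h1 (f0 0) (fun t => if t is inl k then Some k else None) (P x).
  by exists m => t k Ht E; apply: (Hm t) => //; rewrite E.
have [F1 HF1] := choice Ex1.
have Ex2 : forall x, exists m, forall t k, List.In t (P x) -> t = inr k -> lt2 k m \/ k = m.
  move=> x.
  have [m Hm] := list_max h2 (g0 0) (fun t => if t is inr k then Some k else None) (P x).
  by exists m => t k Ht E; apply: (Hm t) => //; rewrite E.
have [F2 HF2] := choice Ex2.
have [U1 [HU1 [_ [m Hm]]]] := bounded_sub hT h1 n1 F1 (unbounded_all hT).
have [U2 [HU2 [Hs2 [n Hn]]]] := bounded_sub hT h2 n2 F2 HU1.
exists U2; split => //; exists m, n => u Hu [k|k] Ht /=.
- exact: (le_or_trans h1 (HF1 u _ k Ht erefl) (Hm u (Hs2 u Hu))).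
- exact: (le_or_trans h2 (HF2 u _ k Ht erefl) (Hn u Hu)).
Qed.

Lemma a'_D s t : I_lt lt1' lt2' s t -> Dm (a' s t).
Proof. by case: ha' => H _; apply: H. Qed.

Lemma sol_from_data (dd : T1 + T2 -> Bm) (P : T1 + T2 -> seq (K1 + K2))
  (Hd : forall s, Dm (dd s))
  (H : forall x y, dd (inl x) `&` dd (inr y) `&` piA a (P (inl x) ++ P (inr y))
                   <= a' (inl x) (inr y))
  (cond : (~ equinumerous T1 K1 /\ ~ equinumerous T1 K2) \/
          (~ equinumerous T2 K1 /\ ~ equinumerous T2 K2)) :
  has_solution Dm a'.
Proof.
case: cond => [[n1 n2]|[n1 n2]].
- have [U [HU [m [n Hb]]]] := bound_side hT1 n1 n2 (fun x => P (inl x)).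
  have [ux Hux] := choice HU.
  pose b := fun s => match s with
    | inl x => dd (inl (ux x)) `&` Bbd m n (P (inl (ux x))) `&`
               (if lt1' x (ux x) then a' (inl x) (inl (ux x)) else \top)
    | inr y => dd (inr y) `&` Bfree m n (P (inr y)) end.
  exists b; split.
  + case=> [x|y] /=.
    * apply: meet_D; first by apply: meet_D; [exact: Hd|exact: Bbd_D].
      by case: ifP => Hl; [apply: a'_D|exact: top_D].
    * by apply: meet_D; [exact: Hd|exact: Bfree_D].
  + move=> x y; rewrite /b; have [Uu Hnu] := Hux x.
    move: (ux x) Uu Hnu => u Uu Hnu.
    have W : dd (inl u) `&` Bbd m n (P (inl u)) `&` (dd (inr y) `&` Bfree m n (P (inr y)))
             <= a' (inl u) (inr y).
      apply: le_trans (H u y); rewrite !lexI; apply/andP; split; first (apply/andP; split).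
      - by apply: le_trans (leIl _ _) _; apply: leIl.
      - by apply: le_trans (leIr _ _) _; apply: leIl.
      - apply: le_trans (proj1 (X_le _ (Hb u Uu))); apply: leI2; exact: leIr.
    case: (boolP (lt1' x u)) => Hl.
    * apply: le_trans (moral_trans hT1 hT2 ha' (s:=inl x) (t:=inl u) (r:=inr y) Hl erefl).
      rewrite lexI; apply/andP; split.
      - by apply: le_trans (leIl _ _) _; apply: leIr.
      - apply: le_trans W; apply: leI2 => //; exact: leIl.
    * have E : u = x.
        apply: NNPP => Hux'; case: (ltT_total hT1 Hux') => Hc.
        - by move: Hnu; rewrite Hc.
        - by move: Hl; rewrite Hc.
      subst u; apply: le_trans W; apply: leI2 => //; exact: leIl.
- have [U [HU [m [n Hb]]]] := bound_side hT2 n1 n2 (fun y => P (inr y)).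
  have [uy Huy] := choice HU.
  pose b := fun s => match s with
    | inl x => dd (inl x) `&` Bfree m n (P (inl x))
    | inr y => dd (inr (uy y)) `&` Bbd m n (P (inr (uy y))) `&`
               (if lt2' y (uy y) then a' (inr (uy y)) (inr y) else \top) end.
  exists b; split.
  + case=> [x|y] /=.
    * by apply: meet_D; [exact: Hd|exact: Bfree_D].
    * apply: meet_D; first by apply: meet_D; [exact: Hd|exact: Bbd_D].
      by case: ifP => Hl; [apply: a'_D|exact: top_D].
  + move=> x y; rewrite /b; have [Uu Hnu] := Huy y.
    move: (uy y) Uu Hnu => u Uu Hnu.
    have W : dd (inl x) `&` Bfree m n (P (inl x)) `&` (dd (inr u) `&` Bbd m n (P (inr u)))
             <= a' (inl x) (inr u).
      apply: le_trans (H x u); rewrite !lexI; apply/andP; split; first (apply/andP; split).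
      - by apply: le_trans (leIl _ _) _; apply: leIl.
      - by apply: le_trans (leIr _ _) _; apply: leIl.
      - apply: le_trans (proj2 (X_le (P (inl x)) (Hb u Uu))).
        rewrite meetC; apply: leI2; exact: leIr.
    case: (boolP (lt2' y u)) => Hl.
    * apply: le_trans (moral_trans hT1 hT2 ha' (s:=inl x) (t:=inr u) (r:=inr y) erefl Hl).
      rewrite lexI; apply/andP; split.
      - apply: le_trans W; apply: leI2 => //; exact: leIl.
      - by apply: le_trans (leIr _ _) _; apply: leIr.
    * have E : u = y.
        apply: NNPP => Hux'; case: (ltT_total hT2 Hux') => Hc.
        - by move: Hnu; rewrite Hc.
        - by move: Hl; rewrite Hc.
      subst u; apply: le_trans W; apply: leI2 => //; exact: leIl.
Qed.
End Part3.

Definition fdisp : Order.disp_t := Order.Disp tt tt.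

Section Construct.
Context (K1 K2 : Type) {dm : Order.disp_t} {Bm : ctbDistrLatticeType dm}
  (a : K1 + K2 -> K1 + K2 -> Bm).
Notation I := (K1 + K2)%type.
Notation pi := (piA a).

Definition inP (w : I) (P : seq I) : bool := `[< List.In w P >].
Lemma inPP w P : reflect (List.In w P) (inP w P).
Proof. exact: asboolP. Qed.

Definition detW (W : seq I) (F : seq I -> Bm) := forall P P',
  (forall w, List.In w W -> (List.In w P <-> List.In w P')) ->
  F P `&` pi P' = F P' `&` pi P.
Definition goodF (F : seq I -> Bm) := (forall P, F P <= pi P) /\ exists W, detW W F.

Lemma detW_app W V F : detW W F -> detW (W ++ V) F /\ detW (V ++ W) F.
Proof.
by move=> H; split => P P' HW; apply: H => w Hw; apply: HW;
  apply: List.in_or_app; [left|right].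
Qed.

Definition B0 := {F : seq I -> Bm | `[< goodF F >]}.
Definition bval (F : B0) : seq I -> Bm := sval F.
Lemma bvalP (F : B0) : goodF (bval F).
Proof. by case: F => F /= /asboolP. Qed.
Lemma bval_le (F : B0) P : bval F P <= pi P.
Proof. by case: (bvalP F) => H _; apply: H. Qed.
Lemma bval_meet_pi (F : B0) P : bval F P `&` pi P = bval F P.
Proof. by apply: meet_l; apply: bval_le. Qed.

Lemma bE (F G : B0) : (forall P, bval F P = bval G P) -> F = G.
Proof.
case: F => F hF; case: G => G hG /= H.
have E : F = G by apply: funext.
by subst; congr exist; apply: Prop_irrelevance.
Qed.

Definition mkB (F : seq I -> Bm) (h : goodF F) : B0 := exist _ F (introT (asboolP _) h).

Lemma good_meet (F G : B0) : goodF (fun P => bval F P `&` bval G P).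
Proof.
case: (bvalP F) => _ [W1 H1]; case: (bvalP G) => _ [W2 H2].
split; first by move=> P; apply: le_trans (leIl _ _) (bval_le _ _).
exists (W1 ++ W2) => P P' HW.
have E1 := (proj1 (detW_app W2 H1)) P P' HW.
have E2 := (proj2 (detW_app W1 H2)) P P' HW.
by rewrite -(meetxx (pi P')) meetACA E1 E2 meetACA meetxx.
Qed.

Lemma good_join (F G : B0) : goodF (fun P => bval F P `|` bval G P).
Proof.
case: (bvalP F) => _ [W1 H1]; case: (bvalP G) => _ [W2 H2].
split; first by move=> P; rewrite leUx !bval_le.
exists (W1 ++ W2) => P P' HW.
have E1 := (proj1 (detW_app W2 H1)) P P' HW.
have E2 := (proj2 (detW_app W1 H2)) P P' HW.
by rewrite !meetUl E1 E2.
Qed.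

Lemma good_compl (F : B0) : goodF (fun P => pi P `&` ~` bval F P).
Proof.
case: (bvalP F) => _ [W H].
split; first by move=> P; apply: leIl.
exists W => P P' HW; have E := H P P' HW.
set z := pi P `&` pi P'.
have -> : pi P `&` ~` bval F P `&` pi P' = z `&` ~` bval F P by rewrite /z meetAC.
have -> : pi P' `&` ~` bval F P' `&` pi P = z `&` ~` bval F P'.
  by rewrite /z meetAC (meetC (pi P')).
rewrite (meet_compl_r (bval F P)) (meet_compl_r (bval F P')); congr (_ `&` ~` _).
by rewrite /z meetA bval_meet_pi E (meetC (pi P)) meetA bval_meet_pi.
Qed.

Lemma good_bot : goodF (fun _ => \bot).
Proof. by split => [P|]; [apply: le0x|exists [::] => P P' _; rewrite !meet0x]. Qed.
Lemma good_top : goodF pi.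
Proof. by split => [P|] //; exists [::] => P P' _; rewrite meetC. Qed.

Definition bmeet F G := mkB (good_meet F G).
Definition bjoin F G := mkB (good_join F G).
Definition bcompl F := mkB (good_compl F).
Definition bbot := mkB good_bot.
Definition btop := mkB good_top.

HB.instance Definition _ := gen_eqMixin B0.
HB.instance Definition _ := gen_choiceMixin B0.

Definition ble (X Y : B0) := bmeet X Y == X.
Definition blt (X Y : B0) := (Y != X) && ble X Y.
Fact ble_def X Y : ble X Y = (bmeet X Y == X). Proof. by []. Qed.
Fact blt_def X Y : blt X Y = (Y != X) && ble X Y. Proof. by []. Qed.
Fact bmeetC : commutative bmeet. Proof. by move=> X Y; apply: bE => P /=; rewrite meetC. Qed.
Fact bjoinC : commutative bjoin. Proof. by move=> X Y; apply: bE => P /=; rewrite joinC. Qed.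
Fact bmeetA : associative bmeet. Proof. by move=> X Y Z; apply: bE => P /=; rewrite meetA. Qed.
Fact bjoinA : associative bjoin. Proof. by move=> X Y Z; apply: bE => P /=; rewrite joinA. Qed.
Fact bjoinKI : forall Y X, bmeet X (bjoin X Y) = X.
Proof. by move=> Y X; apply: bE => P /=; rewrite joinKI. Qed.
Fact bmeetKU : forall Y X, bjoin X (bmeet X Y) = X.
Proof. by move=> Y X; apply: bE => P /=; rewrite meetKU. Qed.
Fact bmeetUl : left_distributive bmeet bjoin.
Proof. by move=> X Y Z; apply: bE => P /=; rewrite meetUl. Qed.
Fact bmeetxx : idempotent_op bmeet.
Proof. by move=> X; apply: bE => P /=; rewrite meetxx. Qed.

HB.instance Definition _ := Order.isMeetJoinDistrLattice.Build fdisp B0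
  ble_def blt_def bmeetC bjoinC bmeetA bjoinA bjoinKI bmeetKU bmeetUl bmeetxx.

Fact ble0x (X : B0) : bbot <= X.
Proof. by apply/eqP/bE => P /=; rewrite meet0x. Qed.
Fact blex1 (X : B0) : X <= btop.
Proof. by apply/eqP/bE => P /=; rewrite bval_meet_pi. Qed.

HB.instance Definition _ := Order.hasBottom.Build fdisp B0 ble0x.
HB.instance Definition _ := Order.hasTop.Build fdisp B0 blex1.

Fact bjoinxC (X : B0) : X `|` bcompl X = \top.
Proof.
apply: bE => P /=; rewrite joinIr (join_r (bval_le X P)) joinxC meetx1 //.
Qed.
Fact bmeetxC (X : B0) : X `&` bcompl X = \bot.
Proof. by apply: bE => P /=; rewrite meetCA meetxC meetx0. Qed.

HB.instance Definition _ :=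
  Order.TBDistrLattice_hasComplement.Build fdisp B0 bjoinxC bmeetxC.

Lemma bv_meet (X Y : B0) P : bval (X `&` Y) P = bval X P `&` bval Y P. Proof. by []. Qed.
Lemma bv_join (X Y : B0) P : bval (X `|` Y) P = bval X P `|` bval Y P. Proof. by []. Qed.
Lemma bv_compl (X : B0) P : bval (~` X) P = pi P `&` ~` bval X P. Proof. by []. Qed.
Lemma bv_bot P : bval (\bot : B0) P = \bot. Proof. by []. Qed.
Lemma bv_top P : bval (\top : B0) P = pi P. Proof. by []. Qed.
Lemma bleE (X Y : B0) : X <= Y <-> forall P, bval X P <= bval Y P.
Proof.
split.
- by move/eqP => <- P; rewrite bv_meet leIr.
- by move=> H; apply/eqP/bE => P; rewrite bv_meet; apply: meet_l.
Qed.
Lemma bv_joins (T : Type) (F : T -> B0) r P :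
  bval (\join_(i <- r) F i) P = \join_(i <- r) bval (F i) P.
Proof. by elim: r => [|x r IH]; rewrite ?big_nil // !big_cons bv_join IH. Qed.
Lemma bv_meets (T : Type) (F : T -> B0) r P :
  bval (\meet_(i <- r) F i) P = pi P `&` \meet_(i <- r) bval (F i) P.
Proof.
elim: r => [|x r IH]; first by rewrite !big_nil meetx1.
by rewrite !big_cons bv_meet IH meetCA.
Qed.

Lemma good_e (c : Bm) : goodF (fun P => c `&` pi P).
Proof.
split; first by move=> P; apply: leIr.
by exists [::] => P P' _; rewrite -!meetA (meetC (pi P)).
Qed.
Definition ee (c : Bm) : B0 := mkB (good_e c).

Lemma good_y (s : I) : goodF (fun P => if inP s P then pi P else \bot).
Proof.
split; first by move=> P; case: ifP => _; rewrite ?le0x.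
exists [:: s] => P P' H.
have E : inP s P = inP s P'.
  have Hss : List.In s [:: s] by left.
  case: (H s Hss) => H1 H2.
  by apply/idP/idP => /inPP Hs; apply/inPP; [exact: H1|exact: H2].
by rewrite E; case: ifP => _; rewrite ?meet0x // meetC.
Qed.
Definition yy (s : I) : B0 := mkB (good_y s).

Lemma ee_hom : ba_hom ee.
Proof.
split.
- by move=> x y; apply: bE => P /=; rewrite meetACA meetxx.
- by move=> x y; apply: bE => P /=; rewrite meetUl.
- move=> x; apply: bE => P /=; rewrite complI meetUr meetxC joinx0 meetC //.
- by apply: bE => P /=; rewrite meet0x.
- by apply: bE => P /=; rewrite meet1x.
Qed.

Lemma yy_rel x1 x2 : yy (inl x1) `&` yy (inr x2) <= ee (a (inl x1) (inr x2)).
Proof.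
apply/bleE => P /=.
case: (inPP (inl x1) P) => H1; case: (inPP (inr x2) P) => H2;
  rewrite ?meet0x ?meetx0 ?le0x // meetxx lexI lexx andbT.
exact: (piA_le a H1 H2).
Qed.
End Construct.

Fixpoint allbs (n : nat) : seq (seq bool) :=
  if n is n'.+1 then [seq true :: b | b <- allbs n'] ++ [seq false :: b | b <- allbs n']
  else [:: [::]].

Lemma In_map (A B : Type) (f : A -> B) (s : seq A) y :
  List.In y (map f s) <-> exists x, f x = y /\ List.In x s.
Proof.
elim: s => [|x s IH] /=; first by split => // -[x []].
split.
- case=> [<-|H]; first by exists x; split => //; left.
  by case: (proj1 IH H) => x' [E H']; exists x'; split => //; right.
- case=> x' [E [Ex|H]]; first by left; rewrite Ex.
  by right; apply: (proj2 IH); exists x'.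
Qed.

Lemma allbs_size n b : List.In b (allbs n) -> size b = n.
Proof.
elim: n b => [|n IH] b /=; first by case=> // <-.
move=> Hb; case: (List.in_app_or _ _ _ Hb) => /In_map [b' [<- H]] /=; by rewrite IH.
Qed.

Lemma allbs_in b : List.In b (allbs (size b)).
Proof.
elim: b => [|c b IH] /=; first by left.
apply: List.in_or_app; case: c; [left|right]; apply/In_map; by exists b.
Qed.

Lemma bigjoin_eq_In {d} {C : ctbDistrLatticeType d} (T : Type) (F G : T -> C) r :
  (forall i, List.In i r -> F i = G i) -> \join_(i <- r) F i = \join_(i <- r) G i.
Proof.
elim: r => [|x r IH] H; rewrite ?big_nil // !big_cons H /=; [|by left].
by rewrite IH // => i Hi; apply: H; right.
Qed.

Lemma mask_In (T : Type) b (W : seq T) x : List.In x (mask b W) -> List.In x W.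
Proof.
elim: W b => [|w W IH] [|c b] //=.
by case: c => /= [[->|/IH]|/IH]; [left|right|right].
Qed.

Section Construct2.
Context (K1 K2 : Type) {dm : Order.disp_t} {Bm : ctbDistrLatticeType dm}
  (a : K1 + K2 -> K1 + K2 -> Bm).
Notation I := (K1 + K2)%type.
Notation pi := (piA a).
Notation B0 := (B0 a).
Notation yy := (yy a).
Notation ee := (ee a).
Notation bval := (@bval _ _ _ _ a).

Fixpoint Yb (W : seq I) (b : seq bool) : B0 :=
  match W, b with
  | w :: W', c :: b' => (if c then yy w else ~` yy w) `&` Yb W' b'
  | _, _ => \top end.
Fixpoint agreeb (W : seq I) (b : seq bool) (P : seq I) : bool :=
  match W, b with
  | w :: W', c :: b' => (inP w P == c) && agreeb W' b' P
  | _, _ => true end.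

Lemma Yb_val W b P : bval (Yb W b) P = if agreeb W b P then pi P else \bot.
Proof.
elim: W b => [|w W IH] [|c b] //=.
rewrite IH; case: c; rewrite ?bv_compl /=;
  case: (inP w P) => /=; case: (agreeb W b P);
  rewrite ?meetxx ?meet0x ?meetx0 ?compl0 ?meetx1 ?meetxC ?meet0x ?meetxx //.
Qed.

Lemma agree_mask W b P : size b = size W -> agreeb W b P ->
  forall w, List.In w W -> (List.In w (mask b W) <-> List.In w P).
Proof.
elim: W b => [|w W IH] [|c b] //= [Hs] /andP [/eqP Hw Ha] x Hx.
case: (classic (w = x)) => [E|NE].
- subst x; case: c Hw => Hw /=.
  + by split => _; [apply/inPP; rewrite Hw|left].
  + split => [H|H]; last by move/inPP: H; rewrite Hw.
    by apply/(IH b Hs Ha w (mask_In H)).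
- case: Hx => [E|Hx]; first by case: NE.
  rewrite -(IH b Hs Ha x Hx); case: c {Hw} => /=; last by [].
  split; first by case=> [E|H] //; case: NE.
  by move=> H; right.
Qed.

Lemma agree_pat W P : agreeb W (map (fun w : I => inP w P) W) P.
Proof. by elim: W => //= w W ->; rewrite eqxx. Qed.

Lemma mask_pat_sub W P x : List.In x (mask (map (fun w : I => inP w P) W) W) -> List.In x P.
Proof.
elim: W => //= w W IH; case E: (inP w P) => /=; last exact: IH.
by case=> [<-|/IH //]; apply/inPP.
Qed.

Lemma gen_repr (F : B0) W : detW a W (bval F) ->
  F = \join_(b <- allbs (size W)) (ee (bval F (mask b W)) `&` Yb W b).
Proof.
move=> hW; apply: bE => P; rewrite bv_joins.
under eq_bigr do rewrite bv_meet Yb_val /=.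
apply: le_anti; apply/andP; split.
- pose b0 := map (fun w : I => inP w P) W.
  have Hb0 : List.In b0 (allbs (size W)) by rewrite -(size_map (fun w : I => inP w P) W); exact: allbs_in.
  apply: le_trans (le_bigjoin _ Hb0); rewrite agree_pat.
  have E : bval F (mask b0 W) `&` pi P = bval F P `&` pi (mask b0 W).
    apply: hW => w Hw; apply: agree_mask => //; [by rewrite size_map|exact: agree_pat].
  rewrite -meetA meetxx E lexI lexx /=.
  apply: le_trans (bval_le F P) _; apply: piA_sub => x; exact: mask_pat_sub.
- apply: bigjoin_le => b Hb; case: ifP => Ha; last by rewrite meetx0 le0x.
  rewrite -meetA meetxx.
  rewrite (hW (mask b W) P) ?leIl // => w Hw.
  exact: agree_mask (allbs_size Hb) Ha w Hw.
Qed.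

Lemma gen_ok : generated_by (fun z : B0 => (exists x, z = ee x) \/ (exists s, z = yy s)).
Proof.
move=> S H0 Hbot Htop HI HU HC F.
have [_ [W hW]] := bvalP F.
rewrite (gen_repr hW).
elim: (allbs (size W)) => [|b L IH]; first by rewrite big_nil.
rewrite big_cons; apply: (HU) => //; apply: (HI); first by apply: (H0); left; eexists.
elim: W b {hW IH} => [|w W IH] [|c b] //=.
apply: (HI) => //; case: c; [|apply: (HC)]; apply: (H0); right; by eexists.
Qed.
End Construct2.

Section Univ.
Context (K1 K2 : Type) {dm : Order.disp_t} {Bm : ctbDistrLatticeType dm}
  (a : K1 + K2 -> K1 + K2 -> Bm).
Notation I := (K1 + K2)%type.
Notation pi := (piA a).
Notation B0 := (B0 a).
Notation yy := (yy a).
Notation ee := (ee a).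
Notation bval := (@bval _ _ _ _ a).
Context {dC : Order.disp_t} {C : ctbDistrLatticeType dC} (g : Bm -> C) (z : I -> C)
  (hg : ba_hom g)
  (hz : forall x1 x2, z (inl x1) `&` z (inr x2) <= g (a (inl x1) (inr x2))).

Fixpoint Zb (W : seq I) (b : seq bool) : C :=
  match W, b with
  | w :: W', c :: b' => (if c then z w else ~` z w) `&` Zb W' b'
  | _, _ => \top end.

Lemma Zb_part W : \join_(b <- allbs (size W)) Zb W b = \top.
Proof.
elim: W => [|w W IH] /=; first by rewrite big_seq1.
have L : forall x, \join_(b <- allbs (size W)) (x `&` Zb W b) =
    x `&` \join_(b <- allbs (size W)) Zb W b.
  by move=> x; rewrite meetC bigjoin_meetl; apply: eq_bigr => b _; rewrite meetC.
by rewrite big_cat !big_map /= !L IH !meetx1 joinxC.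
Qed.

Lemma Zb_disj W b c : size b = size W -> size c = size W -> b != c ->
  Zb W b `&` Zb W c = \bot.
Proof.
elim: W b c => [|w W IH] [|x b] [|y c] //=.
move=> [Hb] [Hc] Hne.
case: (eqVneq x y) => Exy.
- subst y; have Hne' : b != c by apply: contraNneq Hne => ->.
  rewrite meetACA (IH _ _ Hb Hc Hne') meetx0 //.
- rewrite meetACA; apply: le0; apply: le_trans (leIl _ _) _.
  by move: Exy Hne; case: x; case: y => //= _ _; rewrite ?meetxC ?meetCx.
Qed.

Lemma Zb_z (W : seq I) (b : seq bool) (x : I) : List.In x (mask b W) -> Zb W b <= z x.
Proof.
elim: W b => [|w W IH] [|c b] //=.
case: c => /= [[<-|/IH H]|/IH H]; [exact: leIl|exact: le_trans (leIr _ _) H|exact: le_trans (leIr _ _) H].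
Qed.

Lemma Zb_nz (W : seq I) (b : seq bool) (x : I) : size b = size W -> List.In x W -> ~ List.In x (mask b W) -> Zb W b <= ~` z x.
Proof.
elim: W b => [|w W IH] [|c b] //= [Hs] Hx Hn.
case: (classic (w = x)) => E.
- subst x; case: c Hn => /= Hn; first by case: Hn; left.
  exact: leIl.
- case: Hx => [Ex|Hx]; first by case: E.
  apply: le_trans (leIr _ _) _; apply: IH => // H; apply: Hn.
  by case: c => //=; right.
Qed.

Lemma zmeet_pi (M : seq I) : \meet_(s <- M) z s <= g (pi M).
Proof.
rewrite /piA (hom_meets hg); apply: le_bigmeet => s Hs.
rewrite (hom_meets hg); apply: le_bigmeet => t Ht.
case: s Hs => [x1|x2] Hs; case: t Ht => [y1|y2] Ht /=; rewrite ?(hom1 hg) ?lex1 //.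
apply: le_trans (hz x1 y2); rewrite lexI; apply/andP; split; exact: (bigmeet_le z).
Qed.

Lemma Zb_pi W b : Zb W b <= g (pi (mask b W)).
Proof.
apply: le_trans (zmeet_pi _); apply: le_bigmeet => s Hs; exact: Zb_z.
Qed.

Lemma agree_cons_same (W : seq I) (b : seq bool) (M : seq I) (w : I) : agreeb W b M -> (List.In w W -> List.In w M) ->
  agreeb W b (w :: M).
Proof.
elim: W b => [|x W IH] [|c b] //= /andP [/eqP Hx Ha] Hw.
apply/andP; split; last by apply: IH => // H; apply: Hw; right.
apply/eqP; rewrite -Hx; apply/idP/idP => /inPP H; apply/inPP.
- case: H => [E|H] //; subst x; by apply: Hw; left.
- by right.
Qed.

Lemma Zb_cons (W : seq I) (b : seq bool) : size b = size W -> Zb W b <> \bot -> agreeb W b (mask b W).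
Proof.
elim: W b => [|w W IH] [|c b] //= [Hs] Hne.
have Hne' : Zb W b <> \bot by move=> E; apply: Hne; rewrite E meetx0.
have IHa := IH b Hs Hne'.
case: c Hne => /= Hne; apply/andP; split.
- by apply/eqP/inPP; left.
- apply: agree_cons_same => // Hw; apply: NNPP => Hn; apply: Hne.
  apply: le0; rewrite -(meetxC (z w)); apply: leI2 => //; exact: Zb_nz.
- apply/eqP; apply/negbTE/negP => /inPP Hin; apply: Hne.
  apply: le0; rewrite -(meetCx (z w)); apply: leI2 => //; exact: Zb_z.
- exact: IHa.
Qed.

Lemma Zb_cat (W1 : seq I) (b1 : seq bool) (W2 : seq I) (b2 : seq bool) : size b1 = size W1 ->
  Zb (W1 ++ W2) (b1 ++ b2) = Zb W1 b1 `&` Zb W2 b2.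
Proof.
elim: W1 b1 => [|w W IH] [|c b] //= Hs; first by rewrite meet1x.
by rewrite IH ?meetA //; case: Hs.
Qed.

Lemma agree_cat (W1 : seq I) (b1 : seq bool) (W2 : seq I) (b2 : seq bool) (P : seq I) : size b1 = size W1 ->
  agreeb (W1 ++ W2) (b1 ++ b2) P = agreeb W1 b1 P && agreeb W2 b2 P.
Proof.
elim: W1 b1 => [|w W IH] [|c b] //= Hs.
by rewrite IH ?andbA //; case: Hs.
Qed.

Lemma agree_same (W : seq I) (b : seq bool) (P P' : seq I) : size b = size W -> agreeb W b P -> agreeb W b P' ->
  forall w, List.In w W -> (List.In w P <-> List.In w P').
Proof.
elim: W b => [|x W IH] [|c b] //= [Hs] /andP [/eqP H1 A1] /andP [/eqP H2 A2] w Hw.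
case: (classic (x = w)) => E.
- subst w; split => /inPP H; apply/inPP; [by rewrite H2 -H1|by rewrite H1 -H2].
- case: Hw => [Ew|Hw]; [by case: E|exact: (IH b Hs A1 A2 w Hw)].
Qed.

Definition kW (W : seq I) (F : B0) : C :=
  \join_(b <- allbs (size W)) (g (bval F (mask b W)) `&` Zb W b).

Lemma kW_coord W F c : List.In c (allbs (size W)) ->
  kW W F `&` Zb W c = g (bval F (mask c W)) `&` Zb W c.
Proof.
move=> Hc; rewrite /kW bigjoin_meetl; apply: le_anti; apply/andP; split.
- apply: bigjoin_le => b Hb; case: (eqVneq b c) => [->|Hne].
  + by rewrite -meetA meetxx.
  + rewrite -meetA (Zb_disj (allbs_size Hb) (allbs_size Hc) Hne) meetx0; exact: le0x.
- apply: le_trans (le_bigjoin (fun b => g (bval F (mask b W)) `&` Zb W b `&` Zb W c) Hc).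
  by rewrite -meetA meetxx.
Qed.

Lemma C_ext W (x x' : C) :
  (forall c, List.In c (allbs (size W)) -> x `&` Zb W c = x' `&` Zb W c) -> x = x'.
Proof.
move=> H.
rewrite -(meetx1 x) -(meetx1 x') -(Zb_part W) ![_ `&` \join_(_ <- _) _]meetC.
rewrite !bigjoin_meetl; apply: bigjoin_eq_In => c Hc; by rewrite meetC H // meetC.
Qed.

Lemma kW_well W1 W2 F : detW a W1 (bval F) -> detW a W2 (bval F) -> kW W1 F = kW W2 F.
Proof.
move=> h1 h2; apply: (@C_ext (W1 ++ W2)) => c Hc.
have Hsz := allbs_size Hc; rewrite size_cat in Hsz.
pose c1 := take (size W1) c; pose c2 := drop (size W1) c.
have Hs1 : size c1 = size W1 by rewrite size_takel // Hsz leq_addr.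
have Hs2 : size c2 = size W2 by rewrite size_drop Hsz addKn.
have Ec : c = c1 ++ c2 by rewrite cat_take_drop.
have Hc1 : List.In c1 (allbs (size W1)) by rewrite -Hs1; exact: allbs_in.
have Hc2 : List.In c2 (allbs (size W2)) by rewrite -Hs2; exact: allbs_in.
rewrite Ec Zb_cat // meetA (kW_coord _ Hc1) (meetC (Zb W1 c1)) meetA (kW_coord _ Hc2).
rewrite -!meetA (meetC (Zb W2 c2)).
set Z12 := Zb W1 c1 `&` Zb W2 c2.
case: (classic (Z12 = \bot)) => HZ; first by rewrite HZ !meetx0.
pose M1 := mask c1 W1; pose M2 := mask c2 W2; pose M := M1 ++ M2.
have EZ : Zb (W1 ++ W2) (c1 ++ c2) = Z12 by rewrite Zb_cat.
have Hsc : size (c1 ++ c2) = size (W1 ++ W2) by rewrite !size_cat Hs1 Hs2.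
have HM : mask (c1 ++ c2) (W1 ++ W2) = M by rewrite mask_cat.
have A := Zb_cons Hsc; rewrite EZ HM in A; have {}A := A HZ.
rewrite agree_cat // in A; case/andP: A => A1 A2.
have A1' : agreeb W1 c1 M1.
  apply: Zb_cons => // E; apply: HZ; by rewrite /Z12 E meet0x.
have A2' : agreeb W2 c2 M2.
  apply: Zb_cons => // E; apply: HZ; by rewrite /Z12 E meetx0.
have E1 : bval F M1 `&` pi M = bval F M.
  rewrite (h1 M1 M); last by apply: agree_same A1' A1.
  apply: meet_l; apply: le_trans (bval_le F M) _; apply: piA_sub => x Hx.
  exact: List.in_or_app (or_introl Hx).
have E2 : bval F M2 `&` pi M = bval F M.
  rewrite (h2 M2 M); last by apply: agree_same A2' A2.
  apply: meet_l; apply: le_trans (bval_le F M) _; apply: piA_sub => x Hx.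
  exact: List.in_or_app (or_intror Hx).
have Hpi : Z12 <= g (pi M) by rewrite -EZ -HM; exact: Zb_pi.
have -> : Z12 = g (pi M) `&` Z12 by rewrite meetC; apply/esym/meet_l.
by rewrite !meetA -!(hom_meet hg) E1 E2.
Qed.

Definition Wsel (F : B0) : seq I := proj1_sig (cid (proj2 (bvalP F))).
Lemma WselP F : detW a (Wsel F) (bval F).
Proof. exact: proj2_sig (cid (proj2 (bvalP F))). Qed.
Definition kk (F : B0) : C := kW (Wsel F) F.
Lemma kk_eq W F : detW a W (bval F) -> kk F = kW W F.
Proof. by move=> H; apply: kW_well => //; exact: WselP. Qed.

Lemma detW_meet W F G : detW a W F -> detW a W G -> detW a W (fun P => F P `&` G P).
Proof.
move=> h1 h2 P P' H.
by rewrite -(meetxx (pi P')) meetACA (h1 P P' H) (h2 P P' H) meetACA meetxx.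
Qed.
Lemma detW_join W F G : detW a W F -> detW a W G -> detW a W (fun P => F P `|` G P).
Proof. by move=> h1 h2 P P' H; rewrite !meetUl (h1 P P' H) (h2 P P' H). Qed.

Lemma kk_meet F G : kk (F `&` G) = kk F `&` kk G.
Proof.
pose W := Wsel F ++ Wsel G.
have hF : detW a W (bval F) := proj1 (detW_app (Wsel G) (WselP (F:=F))).
have hG : detW a W (bval G) := proj2 (detW_app (Wsel F) (WselP (F:=G))).
rewrite (kk_eq (F := F `&` G) (detW_meet hF hG)) (kk_eq hF) (kk_eq hG).
apply: (@C_ext W) => c Hc.
rewrite kW_coord // -(meetxx (Zb W c)) meetACA kW_coord // kW_coord //.
by rewrite meetACA -(hom_meet hg).
Qed.

Lemma kk_join F G : kk (F `|` G) = kk F `|` kk G.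
Proof.
pose W := Wsel F ++ Wsel G.
have hF : detW a W (bval F) := proj1 (detW_app (Wsel G) (WselP (F:=F))).
have hG : detW a W (bval G) := proj2 (detW_app (Wsel F) (WselP (F:=G))).
rewrite (kk_eq (F := F `|` G) (detW_join hF hG)) (kk_eq hF) (kk_eq hG).
apply: (@C_ext W) => c Hc.
by rewrite kW_coord // meetUl kW_coord // kW_coord // -meetUl -(hom_join hg).
Qed.

Lemma kk_compl F : kk (~` F) = ~` kk F.
Proof.
pose W := Wsel F.
have hF : detW a W (bval F) := WselP (F:=F).
have hC : detW a W (bval (~` F)).
  case: (good_compl F) => _ _; move=> P P' H.
  rewrite !bv_compl.
  set zz := pi P `&` pi P'.
  have -> : pi P `&` ~` bval F P `&` pi P' = zz `&` ~` bval F P by rewrite /zz meetAC.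
  have -> : pi P' `&` ~` bval F P' `&` pi P = zz `&` ~` bval F P'.
    by rewrite /zz meetAC (meetC (pi P')).
  rewrite (meet_compl_r (bval F P)) (meet_compl_r (bval F P')); congr (_ `&` ~` _).
  by rewrite /zz meetA bval_meet_pi (hF P P' H) (meetC (pi P)) meetA bval_meet_pi.
rewrite (kk_eq hC) (kk_eq hF).
apply: (@C_ext W) => c Hc.
rewrite kW_coord // bv_compl (hom_meet hg) (hom_compl hg).
rewrite [RHS]meetC (meet_compl_r (kW W F)) kW_coord // -meet_compl_r.
by rewrite meetAC (meet_r (Zb_pi _ _)).
Qed.

Lemma kW_nil F : kW [::] F = g (bval F [::]).
Proof. by rewrite /kW /= big_seq1 /= meetx1. Qed.

Lemma kk_bot : kk \bot = \bot.
Proof.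
rewrite (@kk_eq [::]) ?kW_nil ?bv_bot ?(hom0 hg) //.
by move=> P P' _; rewrite bv_bot !meet0x.
Qed.

Lemma kk_top : kk \top = \top.
Proof.
rewrite (@kk_eq [::]) ?kW_nil ?bv_top ?piA_nil ?(hom1 hg) //.
by move=> P P' _; rewrite !bv_top meetC.
Qed.

Lemma kk_e x : kk (ee x) = g x.
Proof.
rewrite (@kk_eq [::]) ?kW_nil /= ?piA_nil ?meetx1 //.
by move=> P P' _ /=; rewrite -!meetA (meetC (pi P)).
Qed.

Lemma kk_y s : kk (yy s) = z s.
Proof.
have Hd : detW a [:: s] (bval (yy s)).
  move=> P P' H /=.
  have Hss : List.In s [:: s] by left.
  have E : inP s P = inP s P'.
    case: (H s Hss) => H1 H2.
    by apply/idP/idP => /inPP Hs; apply/inPP; [exact: H1|exact: H2].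
  by rewrite E; case: ifP => _; rewrite ?meet0x // meetC.
rewrite (kk_eq Hd) /kW /= big_cons big_seq1 /=.
have -> : inP s [:: s] = true by apply/inPP; left.
have -> : inP s [::] = false by apply/inPP; case.
have -> : pi [:: s] = \top by rewrite /piA !big_seq1; clear Hd; case: s.
by rewrite (hom1 hg) (hom0 hg) meet1x meet0x meetx1 joinx0.
Qed.

Lemma kk_hom : ba_hom kk.
Proof.
split; [exact: kk_meet|exact: kk_join|exact: kk_compl|exact: kk_bot|exact: kk_top].
Qed.
End Univ.

Lemma B0_univ (K1 K2 : Type) {dm : Order.disp_t} {Bm : ctbDistrLatticeType dm}
  (a : K1 + K2 -> K1 + K2 -> Bm)
  (dC : Order.disp_t) (C : ctbDistrLatticeType dC)
  (g : Bm -> C) (z : K1 + K2 -> C) : ba_hom g ->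
  (forall x1 x2, z (inl x1) `&` z (inr x2) <= g (a (inl x1) (inr x2))) ->
  exists k : B0 a -> C, [/\ ba_hom k, (forall x, k (ee a x) = g x) &
                         (forall s, k (yy a s) = z s)].
Proof.
move=> hg hz; exists (kk (a:=a) g z); split.
- exact: kk_hom.
- exact: kk_e.
- exact: kk_y.
Qed.

Section Main.
Context (K1 K2 : Type) (lt1 : rel K1) (lt2 : rel K2)
  (h1 : inf_reg_card lt1) (h2 : inf_reg_card lt2)
  {dm : Order.disp_t} {Bm : ctbDistrLatticeType dm} (Dm : Bm -> Prop)
  (fm : is_filter Dm)
  (a : K1 + K2 -> K1 + K2 -> Bm) (ha : moral_problem lt1 lt2 Dm a)
  {d0 : Order.disp_t} {B0 : ctbDistrLatticeType d0}
  (e : Bm -> B0) (y : K1 + K2 -> B0) (he : ba_hom e)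
  (hrel : forall x1 x2, y (inl x1) `&` y (inr x2) <= e (a (inl x1) (inr x2)))
  (huniv : forall (dC : Order.disp_t) (C : ctbDistrLatticeType dC)
              (g : Bm -> C) (z : K1 + K2 -> C), ba_hom g ->
         (forall x1 x2, z (inl x1) `&` z (inr x2) <= g (a (inl x1) (inr x2))) ->
         exists k : B0 -> C, [/\ ba_hom k, (forall x, k (e x) = g x) &
                                 (forall s, k (y s) = z s)])
  (hgen : generated_by (fun z => (exists x, z = e x) \/ (exists s, z = y s)))
  {dn : Order.disp_t} {Bn : ctbDistrLatticeType dn} (j : B0 -> Bn)
  (hj : ba_hom j) (ij : injective j)
  (dj : forall x : Bn, x <> \bot -> exists z : B0, z <> \bot /\ j z <= x)
  (Dn : Bn -> Prop) (hDn : forall x, Dn x <-> gen_filter (gens e y j Dm) x).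

Notation h := (hh e j).

Lemma Dn_filter : is_filter Dn.
Proof.
have [H1 H2 H3] := gen_filter_filter (gens e y j Dm).
split.
- by apply/hDn.
- by move=> x x' /hDn Hx le; apply/hDn; apply: H2 Hx le.
- by move=> x x' /hDn Hx /hDn Hx'; apply/hDn; apply: H3.
Qed.

Lemma Dm_iff x : Dm x <-> Dn (h x).
Proof.
split => [Hx|/hDn Hx].
- by apply/hDn; apply: gen_filter_gen; left; exists x.
- have [dd [P [Hd Hl]]] := extract he hj fm Hx.
  have := DX he huniv hj ij Hl => Hle.
  case: fm => _ Hup Hmeet; apply: Hup Hle; apply: Hmeet => //.
  exact: (pi_D fm ha).
Qed.

Lemma basic_mono c c' P N : c <= c' -> basic e y c P N <= basic e y c' P N.
Proof. by move=> H; rewrite /basic; apply: leI2 => //; apply: leI2 => //; apply: hom_le. Qed.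

Lemma h_regular (S : Bm -> Prop) x : is_lub S x ->
  is_lub (fun w => exists z, S z /\ w = h z) (h x).
Proof.
move=> [Hub Hl]; split.
  by move=> w [z [Hz ->]]; apply: hom_le (hh_hom he hj) _ _ (Hub z Hz).
move=> w Hw; apply: NNPP => Hn.
have Hne : h x `&` ~` w <> \bot by move=> E; apply: Hn; rewrite -meet_compl_le E.
have [q [Hq0 Hq]] := dj Hne.
have [c [P [N [Hb0 Hbq]]]] := basic_below he hgen Hq0.
set bx := basic e y c P N.
have Hjb : j bx <= h x `&` ~` w by apply: le_trans Hq; apply: hom_le.
have Hbx : bx <= e x by apply: (j_refl hj ij); apply: le_trans Hjb (leIl _ _).
have Ebx : bx `&` e x = basic e y (c `&` x) P N.
  by rewrite /bx /basic (hom_meet he) meetAC; congr (_ `&` _); rewrite meetAC.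
have Hb1 : basic e y (c `&` x) P N <> \bot.
  by move=> E; apply: Hb0; rewrite -/bx -(meet_l Hbx) Ebx E.
have [Hdisj Hc'] := basic_nz he hrel Hb1.
have [s [Hs Hcs]] : exists s, S s /\ c `&` x `&` piA a P `&` s <> \bot.
  apply: NNPP => Hno; apply: Hc'.
  have Hup : forall s, S s -> s <= ~` (c `&` x `&` piA a P).
    move=> s Hs; rewrite lexC; apply/disjC; apply: NNPP => Hne'; apply: Hno.
    by exists s; split.
  have := Hl _ Hup => Hx.
  apply: le0; rewrite -(meetxC (c `&` x `&` piA a P)); rewrite lexI lexx /=.
  apply: le_trans Hx; exact: le_trans (leIl _ _) (leIr _ _).
have Hb2 : basic e y (c `&` x `&` s) P N <> \bot.
  move=> E; apply: Hcs; rewrite meetAC; exact: (basic_refl huniv Hdisj E).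
apply: Hb2; apply: (inj_hom0 hj ij); apply: le0.
rewrite -(meetxC w); rewrite lexI; apply/andP; split.
- apply: le_trans (Hw (h s) (ex_intro _ s (conj Hs erefl))).
  apply: hom_le => //; rewrite /basic; apply: le_trans (leIl _ _) _; apply: le_trans (leIl _ _) _.
  by apply: hom_le => //; exact: leIr.
- apply: le_trans (le_trans _ Hjb) (leIr _ _); apply: hom_le => //.
  apply: basic_mono; rewrite -meetA; exact: leIl.
Qed.

Lemma Bn_chain (K : Type) (ltK : rel K) (hK : inf_reg_card ltK)
  (hcm : chain_cond Bm K) (hKK : card_lt (K1 + K2) K) : chain_cond Bn K.
Proof.
move=> A [A0 Adisj] [f [fi fA]].
have hT : forall k, exists t : Bm * seq (K1 + K2) * seq (K1 + K2),
    basic e y t.1.1 t.1.2 t.2 <> \bot /\ j (basic e y t.1.1 t.1.2 t.2) <= f k.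
  move=> k; have [q [Hq0 Hq]] := dj (A0 _ (fA k)).
  have [c [P [N [Hb Hbq]]]] := basic_below he hgen Hq0.
  exists (c, P, N); split => //; apply: le_trans Hq; exact: hom_le hj _ _ Hbq.
have [T HT] := choice hT.
have nKI : ~ card_le K (K1 + K2) := proj2 hKK.
have nI : card_le nat (K1 + K2).
  have [f0 f0i] := nat_le_T h1; exists (fun n => inl (f0 n)) => n m [] /f0i.
  done.
have [P0 HP0] := seq_fiber hK nKI nI (fun k => (T k).1.2) (unbounded_all hK).
have [N0 HN0] := seq_fiber hK nKI nI (fun k => (T k).2) HP0.
have [rho [rhoi Hrho]] := ltT_reg hK HN0.
pose c k := (T (rho k)).1.1.
have Hbk : forall k, basic e y (c k) P0 N0 <> \bot /\ j (basic e y (c k) P0 N0) <= f (rho k).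
  move=> k; case: (Hrho k) => [[_ E1] E2]; have := HT (rho k).
  by rewrite /= in E1 E2; rewrite E1 E2.
have Hnz : forall k, c k `&` piA a P0 <> \bot.
  by move=> k; exact: (proj2 (basic_nz he hrel (proj1 (Hbk k)))).
have Hpair : forall k k', k <> k' -> (c k `&` piA a P0) `&` (c k' `&` piA a P0) = \bot.
  move=> k k' Hkk.
  have Hr : rho k <> rho k' by move/rhoi.
  have Hf : f (rho k) <> f (rho k') by move/fi.
  have Hff := Adisj _ _ (fA _) (fA _) Hf.
  have Hbb : basic e y (c k) P0 N0 `&` basic e y (c k') P0 N0 = \bot.
    apply: (inj_hom0 hj ij); apply: le0; rewrite -Hff (hom_meet hj).
    by apply: leI2; [exact: (proj2 (Hbk k))|exact: (proj2 (Hbk k'))].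
  rewrite (basic_meet _ he) in Hbb.
  have [Hdisj _] := basic_nz he hrel (proj1 (Hbk k)).
  have Hdisj2 : forall s, List.In s (P0 ++ P0) -> ~ List.In s (N0 ++ N0).
    move=> s Hs Hn; case: (List.in_app_or _ _ _ Hs) => Hs';
      case: (List.in_app_or _ _ _ Hn) => Hn'; exact: (Hdisj _ Hs' Hn').
  have Epi : piA a (P0 ++ P0) = piA a P0.
    apply: le_anti; apply/andP; split; apply: piA_sub => x Hx.
    + by apply: List.in_or_app; left.
    + by case: (List.in_app_or _ _ _ Hx).
  have := basic_refl huniv Hdisj2 Hbb; rewrite Epi => E.
  by rewrite meetACA meetxx.
apply: (hcm (fun w => exists k, w = c k `&` piA a P0)).
- split.
  + by move=> x [k ->]; apply: Hnz.
  + move=> x x' [k ->] [k' ->] Hne; apply: Hpair => Ek; apply: Hne; by rewrite Ek.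
- exists (fun k => c k `&` piA a P0); split; last by move=> k; exists k.
  move=> k k' E; apply: NNPP => Hkk; apply: (Hnz k).
  by have := Hpair k k' Hkk; rewrite -E meetxx.
Qed.

Lemma part3 (T1 T2 : Type) (lt1' : rel T1) (lt2' : rel T2)
  (a' : T1 + T2 -> T1 + T2 -> Bm) (hT1 : inf_reg_card lt1') (hT2 : inf_reg_card lt2')
  (ha' : moral_problem lt1' lt2' Dm a') (hns : ~ has_solution Dm a')
  (cond : (~ equinumerous T1 K1 /\ ~ equinumerous T1 K2) \/
          (~ equinumerous T2 K1 /\ ~ equinumerous T2 K2)) :
  ~ has_solution Dn (fun s t => h (a' s t)).
Proof.
move=> [b' [Hb' Hsol]].
have Ex : forall s, exists p : Bm * seq (K1 + K2), Dm p.1 /\ h p.1 `&` j (yP y p.2) <= b' s.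
  move=> s; have [dd [P [Hd Hl]]] := extract he hj fm (proj1 (hDn _) (Hb' s)).
  by exists (dd, P).
have [Q HQ] := choice Ex.
apply: hns; apply: (sol_from_data h1 h2 fm ha hT1 hT2 ha' (dd := fun s => (Q s).1)
  (P := fun s => (Q s).2)).
- by move=> s; case: (HQ s).
- move=> x y'; apply: (key_ineq he huniv hj ij (proj2 (HQ (inl x))) (proj2 (HQ (inr y')))).
  exact: Hsol.
- exact: cond.
Qed.
End Main.

Lemma gen_filter_map {d1 d2 : Order.disp_t} {X : ctbDistrLatticeType d1}
  {Y : ctbDistrLatticeType d2} (f : X -> Y) (hf : ba_hom f) (fi : injective f)
  (G : X -> Prop) (G' : Y -> Prop) (H1 : forall w, G w -> G' (f w))
  (H2 : forall w', G' w' -> exists w, G w /\ f w = w') x :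
  gen_filter G x <-> gen_filter G' (f x).
Proof.
split.
- move=> [u [Hu Hl]]; exists (map f u); split.
  + by move=> g /In_map [w [<- Hw]]; apply: H1; apply: Hu.
  + by rewrite big_map -(hom_meets hf); apply: hom_le.
- move=> [u' [Hu' Hl]].
  have [u [Hu Eu]] : exists u, (forall w, List.In w u -> G w) /\
      \meet_(w <- u) f w = \meet_(g <- u') g.
    elim: u' Hu' {Hl} => [|g u' IH] Hu'.
      by exists [::]; split => //; rewrite !big_nil.
    have [w [Hw Ew]] := H2 g (Hu' g (or_introl erefl)).
    have [u [Hu Eu]] := IH (fun g' Hg' => Hu' g' (or_intror Hg')).
    exists (w :: u); split; first by move=> w' [<-|/Hu].
    by rewrite !big_cons Ew Eu.
  exists u; split => //; apply: (hom_refl0 hf (inj_hom0 hf fi)).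
  by rewrite (hom_meets hf) Eu.
Qed.

Unset Implicit Arguments.

Theorem claim4p9
  (K : Type) (ltK : rel K) (hK : inf_reg_card ltK)
  (dm : Order.disp_t) (Bm : ctbDistrLatticeType dm) (Dm : Bm -> Prop)
  (hm : in_Kba K Dm)
  (K1 K2 : Type) (lt1 : rel K1) (lt2 : rel K2)
  (hK1 : inf_reg_card lt1) (hK2 : inf_reg_card lt2)
  (hKK : card_lt (K1 + K2) K)
  (a : K1 + K2 -> K1 + K2 -> Bm) (ha : moral_problem lt1 lt2 Dm a) :
  (* (1) existence *)
  (exists (dn : Order.disp_t) (Bn : ctbDistrLatticeType dn) (Dn : Bn -> Prop)
          (h : Bm -> Bn), simple_solving_ext Dm a Dn h) /\
  (* (1) uniqueness up to isomorphism over B_m *)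
  (forall (dn dn' : Order.disp_t) (Bn : ctbDistrLatticeType dn)
          (Bn' : ctbDistrLatticeType dn') (Dn : Bn -> Prop) (Dn' : Bn' -> Prop)
          (h : Bm -> Bn) (h' : Bm -> Bn'),
     simple_solving_ext Dm a Dn h -> simple_solving_ext Dm a Dn' h' ->
     exists iso : Bn -> Bn', [/\ ba_hom iso, bijective iso,
        (forall x, iso (h x) = h' x) & (forall x, Dn x <-> Dn' (iso x))]) /\
  (* (2) and (3) for any simple a-solving extension *)
  (forall (dn : Order.disp_t) (Bn : ctbDistrLatticeType dn) (Dn : Bn -> Prop)
          (h : Bm -> Bn), simple_solving_ext Dm a Dn h ->
     [/\ in_Kba K Dn, le_ba K Dm Dn h &
         forall (T1 T2 : Type) (lt1' : rel T1) (lt2' : rel T2)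
                (a' : T1 + T2 -> T1 + T2 -> Bm),
           inf_reg_card lt1' -> inf_reg_card lt2' ->
           moral_problem lt1' lt2' Dm a' -> ~ has_solution Dm a' ->
           (~ equinumerous T1 K1 /\ ~ equinumerous T1 K2) \/
           (~ equinumerous T2 K1 /\ ~ equinumerous T2 K2) ->
           ~ has_solution Dn (fun s t => h (a' s t))]).
Proof.
case: hm => cm ccm fm.
split; [|split].
- exists cdisp, (Comp (B0 a)), (gen_filter (gens (ee a) (yy a) (@cj _ (B0 a)) Dm)), (fun x => @cj _ (B0 a) (ee a x)).
  exists fdisp, (B0 a), (ee a), (yy a), (@cj _ (B0 a)); split.
  + split; [exact: ee_hom|exact: yy_rel|exact: gen_ok|].
    by move=> dC C g z hg hz; exact: B0_univ hg hz.
  + split; [exact: comp_complete|exact: cj_hom|exact: cj_inj|exact: cj_dense].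
  + by [].
  + by [].
- move=> dn dn' Bn Bn' Dn Dn' h h'
    [d0 [B0 [e [y [j [[he hrel hgen huniv] [cn hj ij dj] Eh HDn]]]]]]
    [d0' [B0' [e' [y' [j' [[he' hrel' hgen' huniv'] [cn' hj' ij' dj'] Eh' HDn']]]]]].
  have [k [hk ke ky]] := huniv _ B0' e' y' he' hrel'.
  have [k' [hk' ke' ky']] := huniv' _ B0 e y he hrel.
  have k'k : forall x, k' (k x) = x.
    apply: (hgen (fun x => k' (k x) = x)).
    + by move=> x [[v ->]|[s ->]]; rewrite ?ke ?ke' ?ky ?ky'.
    + by rewrite (hom0 hk) (hom0 hk').
    + by rewrite (hom1 hk) (hom1 hk').
    + by move=> x x' H1 H2; rewrite (hom_meet hk) (hom_meet hk') H1 H2.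
    + by move=> x x' H1 H2; rewrite (hom_join hk) (hom_join hk') H1 H2.
    + by move=> x H1; rewrite (hom_compl hk) (hom_compl hk') H1.
  have kk' : forall x, k (k' x) = x.
    apply: (hgen' (fun x => k (k' x) = x)).
    + by move=> x [[v ->]|[s ->]]; rewrite ?ke ?ke' ?ky ?ky'.
    + by rewrite (hom0 hk') (hom0 hk).
    + by rewrite (hom1 hk') (hom1 hk).
    + by move=> x x' H1 H2; rewrite (hom_meet hk') (hom_meet hk) H1 H2.
    + by move=> x x' H1 H2; rewrite (hom_join hk') (hom_join hk) H1 H2.
    + by move=> x H1; rewrite (hom_compl hk') (hom_compl hk) H1.
  have ki : injective k := can_inj k'k.
  have dnY : forall x : Bn', x <> \bot -> exists z, z <> \bot /\ (j' \o k) z <= x.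
    move=> x Hx; have [q [Hq0 Hq]] := dj' x Hx; exists (k' q); split.
    + by move=> E; apply: Hq0; rewrite -(kk' q) E (hom0 hk).
    + by rewrite /= kk'.
  have [f [hf [finv f1 f2] fj]] := completion_iso hj (hom_comp hk hj') ij
    (inj_comp ij' ki) dj dnY cn cn'.
  have fi : injective f := can_inj f1.
  have fh : forall x, f (h x) = h' x by move=> x; rewrite Eh fj /= ke Eh'.
  exists f; split => //; first by exists finv.
  move=> x; rewrite HDn HDn'; apply: gen_filter_map => //.
  + move=> w [[v [Hv ->]]|[s ->]]; [left; exists v; split => //|right; exists s].
    by rewrite fj /= ky.
  + move=> w [[v [Hv ->]]|[s ->]]; [exists (h v); split; [left; by exists v|]|].
    * exact: fh.
    * exists (j (y s)); split; [right; by exists s|by rewrite fj /= ky].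
- move=> dn Bn Dn h [d0 [B0 [e [y [j [[he hrel hgen huniv] [cn hj ij dj] Eh HDn]]]]]].
  have Eh2 : h = hh e j := funext Eh.
  subst h.
  have inKn : in_Kba K Dn.
    split => //.
    + exact: (Bn_chain hK1 he hrel huniv hgen hj ij dj hK ccm hKK).
    + exact: (Dn_filter HDn).
  split => //.
  + split; first by split.
    split => //; split.
    * exact: hh_hom.
    * exact: (hh_inj he huniv hj ij).
    * by move=> S x Hx; exact: (h_regular he hrel huniv hgen hj ij dj Hx).
    * by move=> x; exact: (Dm_iff fm ha he huniv hj ij HDn x).
  + move=> T1 T2 lt1' lt2' a' hT1 hT2 ha' hns cond.
    exact: (part3 hK1 hK2 fm ha he huniv hj ij HDn hT1 hT2 ha' hns cond).
Qed.
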